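(* (1) For any binary operator $\Box$ on a set $\mathbb D$, any (possibly infinite) system of pure equations $x=f_x$ ($x\in X$), any initial mapping $\rho_0:X\to\mathbb D$ and any unknown $x_0$, if algorithm SLR$_1$ (defined below) terminates, then it returns a partial $\Box$-solution $(\mathsf{dom},\rho)$ with $x_0\in\mathsf{dom}$. (2) If $\mathbb D$ is a directed set, every right-hand side is monotonic, and $\Box=\boxdot$, then for any initial mapping $\rho_0$ and any $x_0$, SLR$_1$ terminates (and thus returns a partial post solution containing $x_0$ in its domain) whenever only finitely many unknowns are ever added to $\mathsf{dom}$ during the run.
   Context: A right-hand side $f$ is pure if it is given as a finite-depth (well-founded) query tree: either $\mathsf{Return}(d)$ with $d\in\mathbb D$, or $\mathsf{Query}(y,k)$ with $y\in X$ and $k:\mathbb D\to$ tree; $f$ is evaluated w.r.t. a lookup function $g:X\to\mathbb D$ by answering each query $y$ with $g(y)$ until a value is returned; $f\rho$ denotes evaluation with $g=\rho$, and $\mathsf{dep}_x\rho$ is the set of unknowns queried when evaluating $f_x\rho$. A partial $\Box$-solution is a pair of a set $\mathsf{dom}\subseteq X$ and $\rho:\mathsf{dom}\to\mathbb D$ such that for all $x\in\mathsf{dom}$: $\mathsf{dep}_x\rho\subseteq\mathsf{dom}$ and $\rho[x]=\rho[x]\,\Box\, f_x\rho$. (Partial post solution: same but $\rho[x]\sqsupseteq f_x\rho$.) Monotonic: $\rho\sqsubseteq\rho'$ pointwise (total maps) implies $f_x\rho\sqsubseteq f_x\rho'$. Algorithm SLR$_1$: global state: set $\mathsf{dom}$,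 map $\rho$ on $\mathsf{dom}$, integer $\mathsf{count}$, map $\mathsf{key}:\mathsf{dom}\to\mathbb Z$, map $\mathsf{infl}$ from unknowns to sets of unknowns (default $\emptyset$), set $\mathsf{stable}$, priority queue $Q$ keyed by $\mathsf{key}$ (no duplicates). $\mathsf{init}(y)$: $\mathsf{dom}:=\mathsf{dom}\cup\{y\}$; $\mathsf{key}[y]:=-\mathsf{count}$; $\mathsf{count}:=\mathsf{count}+1$; $\mathsf{infl}[y]:=\{y\}$; $\rho[y]:=\rho_0[y]$. $\mathsf{eval}(x,y)$: if $y\notin\mathsf{dom}$ then $\mathsf{init}(y)$; $\mathsf{solve}(y)$; end; $\mathsf{infl}[y]:=\mathsf{infl}[y]\cup\{x\}$; return $\rho[y]$. $\mathsf{solve}(x)$: if $x\notin\mathsf{stable}$ then: $\mathsf{stable}:=\mathsf{stable}\cup\{x\}$; $tmp:=\rho[x]\,\Box\, v$ where $v$ is the result of evaluating the tree $f_x$ answering each query $y$ by $\mathsf{eval}(x,y)$ (reading $\rho[x]$ before the evaluation); if $tmp\neq\rho[x]$ then: $W:=\mathsf{infl}[x]\cup\{x\}$; add every $y\in W$ to $Q$; $\rho[x]:=tmp$; $\mathsf{infl}[x]:=\emptyset$; $\mathsf{stable}:=\mathsf{stable}\setminus W$; while $Q\neq\emptyset$ and the minimal key in $Q$ is $\le\mathsf{key}[x]$: remove the element of $Q$ with minimal key and call $\mathsf{solve}$ on it. Main: $\mathsf{stable},\mathsf{dom}:=\emptyset$, $\mathsf{infl}$ empty, $\rho$ empty, $Q$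 empty, $\mathsf{count}:=0$; $\mathsf{init}(x_0)$; $\mathsf{solve}(x_0)$; return $(\mathsf{dom},\rho)$. Widening $\nabla$: $a\sqsubseteq a\nabla b$, $b\sqsubseteq a\nabla b$, no infinite sequence with $a_{i+1}=a_i\nabla b_i\neq a_i$ for all $i$. Narrowing $\triangle$: $b\sqsubseteq a$ implies $b\sqsubseteq a\triangle b\sqsubseteq a$, no infinite sequence with $b_i\sqsubseteq a_i$, $a_{i+1}=a_i\triangle b_i\neq a_i$ for all $i$. $a\boxdot b=a\triangle b$ if $b\sqsubseteq a$, else $a\nabla b$. *)

(* Defs.v *)
(* Classical decisions (excluded_middle_informative) are used
   for the tests performed by the algorithm, so that X and D are arbitrary types. *)
From Stdlib Require Import ZArith List ClassicalEpsilon.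
Import ListNotations.
Set Implicit Arguments.

(* ---------- Pure right-hand sides: well-founded query trees ---------- *)
Inductive tree (X D : Type) : Type :=
| Return : D -> tree X D
| Query : X -> (D -> tree X D) -> tree X D.
Arguments Return {X D} _.
Arguments Query {X D} _ _.

Fixpoint evalT {X D : Type} (g : X -> D) (t : tree X D) : D :=
  match t with
  | Return d => d
  | Query y k => evalT g (k (g y))
  end.

Fixpoint dep {X D : Type} (g : X -> D) (t : tree X D) : X -> Prop :=
  match t with
  | Return _ => fun _ => False
  | Query y k => fun z => z = y \/ dep g (k (g y)) z
  end.

(* (dom, rho) : rho is only relevant on dom; since dep ⊆ dom, the evaluation
   only reads values on dom. *)
Definition partial_box_solution {X D : Type} (box : D -> D -> D)
    (f : X -> tree X D) (dom : X -> Prop) (rho : X -> D) : Prop :=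
  forall x, dom x ->
    (forall y, dep rho (f x) y -> dom y) /\ rho x = box (rho x) (evalT rho (f x)).

Definition partial_post_solution {X D : Type} (le : D -> D -> Prop)
    (f : X -> tree X D) (dom : X -> Prop) (rho : X -> D) : Prop :=
  forall x, dom x ->
    (forall y, dep rho (f x) y -> dom y) /\ le (evalT rho (f x)) (rho x).

Definition directed {D : Type} (le : D -> D -> Prop) : Prop :=
  (forall a, le a a) /\ (forall a b c, le a b -> le b c -> le a c) /\
  (forall a b, exists c, le a c /\ le b c).

Definition monotonic {X D : Type} (le : D -> D -> Prop) (f : X -> tree X D) : Prop :=
  forall x (rho rho' : X -> D), (forall y, le (rho y) (rho' y)) ->
    le (evalT rho (f x)) (evalT rho' (f x)).

Definition is_widening {D : Type} (le : D -> D -> Prop) (wid : D -> D -> D) : Prop :=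
  (forall a b, le a (wid a b)) /\ (forall a b, le b (wid a b)) /\
  ~ (exists (a b : nat -> D), forall i, a (S i) = wid (a i) (b i) /\ a (S i) <> a i).

Definition is_narrowing {D : Type} (le : D -> D -> Prop) (nar : D -> D -> D) : Prop :=
  (forall a b, le b a -> le b (nar a b) /\ le (nar a b) a) /\
  ~ (exists (a b : nat -> D), forall i,
        le (b i) (a i) /\ a (S i) = nar (a i) (b i) /\ a (S i) <> a i).

Definition dec (P : Prop) : {P} + {~ P} := excluded_middle_informative P.

Definition boxdot {D : Type} (le : D -> D -> Prop) (wid nar : D -> D -> D)
    (a b : D) : D :=
  if dec (le b a) then nar a b else wid a b.

Record state (X D : Type) := mkState {
  sdom : X -> Prop;
  srho : X -> D;
  scount : Z;
  skey : X -> Z;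
  sinfl : X -> list X;
  sstable : X -> Prop;
  sQ : list X }.
Arguments mkState {X D}.

(* results of a run with fuel: either finished, or out of fuel together with
   the (genuine, intermediate) state reached at that point *)
Inductive result (X D A : Type) :=
| Done : state X D -> A -> result X D A
| OutOfFuel : state X D -> result X D A.
Arguments Done {X D A}.
Arguments OutOfFuel {X D A}.

Definition res_state {X D A} (r : result X D A) : state X D :=
  match r with Done s _ => s | OutOfFuel s => s end.

Definition upd {X A : Type} (g : X -> A) (x : X) (v : A) : X -> A :=
  fun y => if dec (y = x) then v else g y.

Definition addQ {X : Type} (Q : list X) (y : X) : list X :=
  if dec (In y Q) then Q else Q ++ [y].

Definition removeQ {X : Type} (y : X) (Q : list X) : list X :=
  filter (fun z => if dec (z = y) then false else true) Q.

Fixpoint minQ {X : Type} (key : X -> Z) (Q : list X) : option X :=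
  match Q with
  | [] => None
  | y :: Q' => match minQ key Q' with
               | None => Some y
               | Some z => if Z.leb (key y) (key z) then Some y else Some z
               end
  end.

Section SLR1.
Variables (X D : Type) (box : D -> D -> D) (f : X -> tree X D) (rho0 : X -> D).

Definition empty_state : state X D :=
  mkState (fun _ => False) rho0 0%Z (fun _ => 0%Z) (fun _ => []) (fun _ => False) [].

Definition init (y : X) (s : state X D) : state X D :=
  mkState (fun z => z = y \/ sdom s z)
          (upd (srho s) y (rho0 y))
          (scount s + 1)%Z
          (upd (skey s) y (- scount s)%Z)
          (upd (sinfl s) y [y])
          (sstable s)
          (sQ s).

Fixpoint solve (n : nat) (x : X) (s : state X D) {struct n} : result X D unit :=
  match n with
  | O => OutOfFuel s
  | S n' =>
    if dec (sstable s x) then Done s tt else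
    let s1 := mkState (sdom s) (srho s) (scount s) (skey s) (sinfl s)
                      (fun z => z = x \/ sstable s z) (sQ s) in
    let old := srho s1 x in
    let ev := fix ev (t : tree X D) (s : state X D) {struct t} : result X D D :=
      match t with
      | Return d => Done s d
      | Query y k =>
        let r := if dec (sdom s y) then Done s tt else solve n' y (init y s) in
        match r with
        | OutOfFuel s' => OutOfFuel s'
        | Done s' _ =>
          let s'' := mkState (sdom s') (srho s') (scount s') (skey s')
                       (upd (sinfl s') y (x :: sinfl s' y)) (sstable s') (sQ s') in
          ev (k (srho s'' y)) s''
        end
      end in
    match ev (f x) s1 with
    | OutOfFuel s2 => OutOfFuel s2
    | Done s2 v =>
      let tmp := box old v in
      if dec (tmp = srho s2 x) then Done s2 tt else
      let W := x :: sinfl s2 x in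
      let s3 := mkState (sdom s2) (upd (srho s2) x tmp) (scount s2) (skey s2)
                  (upd (sinfl s2) x []) (fun z => sstable s2 z /\ ~ In z W)
                  (fold_left addQ W (sQ s2)) in
      loop n' x s3
    end
  end
with loop (n : nat) (x : X) (s : state X D) {struct n} : result X D unit :=
  match n with
  | O => OutOfFuel s
  | S n' =>
    match minQ (skey s) (sQ s) with
    | None => Done s tt
    | Some y =>
      if Z.leb (skey s y) (skey s x) then
        let s' := mkState (sdom s) (srho s) (scount s) (skey s) (sinfl s)
                    (sstable s) (removeQ y (sQ s)) in
        match solve n' y s' with
        | OutOfFuel s'' => OutOfFuel s''
        | Done s'' _ => loop n' x s''
        end
      else Done s tt
    end
  end.

Definition run (x0 : X) (n : nat) : result X D unit :=
  solve n x0 (init x0 empty_state).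

End SLR1.

(* Main.v *)
Require Import Defs.
From Stdlib Require Import ZArith List Lia ClassicalEpsilon Relations Wellfounded.
Import ListNotations.
Set Implicit Arguments.
Set Warnings "-intuition-auto-with-star -deprecated -deprecated-since-8.17 -default".

Section S.
Variables (X D : Type) (box : D -> D -> D) (f : X -> tree X D) (rho0 : X -> D).
Notation state := (state X D).

Definition qstep (x y : X) (s' : state) : state :=
  mkState (sdom s') (srho s') (scount s') (skey s')
          (upd (sinfl s') y (x :: sinfl s' y)) (sstable s') (sQ s').

Fixpoint evF (sv : X -> state -> result X D unit) (x : X) (t : tree X D) (s : state)
  : result X D D :=
  match t with
  | Return d => Done s d
  | Query y k =>
    match (if dec (sdom s y) then Done s tt else sv y (init rho0 y s)) with
    | OutOfFuel s' => OutOfFuel s'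
    | Done s' _ => evF sv x (k (srho (qstep x y s') y)) (qstep x y s')
    end
  end.

Definition s1of (x : X) (s : state) : state :=
  mkState (sdom s) (srho s) (scount s) (skey s) (sinfl s)
          (fun z => z = x \/ sstable s z) (sQ s).

Definition s3of (x : X) (s2 : state) (tmp : D) : state :=
  mkState (sdom s2) (upd (srho s2) x tmp) (scount s2) (skey s2)
          (upd (sinfl s2) x []) (fun z => sstable s2 z /\ ~ In z (x :: sinfl s2 x))
          (fold_left addQ (x :: sinfl s2 x) (sQ s2)).

Definition popst (y : X) (s : state) : state :=
  mkState (sdom s) (srho s) (scount s) (skey s) (sinfl s) (sstable s) (removeQ y (sQ s)).

Lemma solve_S n x s : solve box f rho0 (S n) x s =
  if dec (sstable s x) then Done s tt else
  match evF (solve box f rho0 n) x (f x) (s1of x s) with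
  | Done s2 v => if dec (box (srho s x) v = srho s2 x) then Done s2 tt
                 else loop box f rho0 n x (s3of x s2 (box (srho s x) v))
  | OutOfFuel s2 => OutOfFuel s2
  end.
Proof. simpl. destruct (dec (sstable s x)); [reflexivity|].
  match goal with |- match ?a with _ => _ end = match ?b with _ => _ end => 
    assert (E : a = b) end.
  { unfold s1of. generalize (f x). generalize (mkState (sdom s) (srho s) (scount s) (skey s) (sinfl s)
          (fun z => z = x \/ sstable s z) (sQ s)). intros s0 t. revert s0. induction t; intros s0; simpl. reflexivity.
    destruct (dec (sdom s0 x0)). apply H. destruct (solve box f rho0 n x0 (init rho0 x0 s0)). apply H. reflexivity. }
  rewrite E. reflexivity.
Qed.

Lemma loop_S n x s : loop box f rho0 (S n) x s =
  match minQ (skey s) (sQ s) with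
  | None => Done s tt
  | Some y => if Z.leb (skey s y) (skey s x) then
      match solve box f rho0 n y (popst y s) with
      | Done s'' _ => loop box f rho0 n x s''
      | OutOfFuel s'' => OutOfFuel s''
      end else Done s tt
  end.
Proof. reflexivity. Qed.

Lemma upd_eq {A : Type} (g : X -> A) x v : upd g x v x = v.
Proof. unfold upd. destruct (dec (x = x)); congruence. Qed.
Lemma upd_neq {A : Type} (g : X -> A) x v z : z <> x -> upd g x v z = g z.
Proof. unfold upd. destruct (dec (z = x)); congruence. Qed.

Lemma In_addQ (Q : list X) y z : In z (addQ Q y) <-> In z Q \/ z = y.
Proof. unfold addQ. destruct (dec (In y Q)).
  - split; [auto|]. intros [H|H]; subst; auto.
  - rewrite in_app_iff. simpl. intuition.
Qed.

Lemma In_fold_addQ (W Q : list X) z : In z (fold_left addQ W Q) <-> In z Q \/ In z W.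
Proof. revert Q. induction W as [|w W IH]; intros Q; simpl.
  - intuition.
  - rewrite IH, In_addQ. intuition.
Qed.

Lemma In_removeQ (Q : list X) y z : In z (removeQ y Q) <-> In z Q /\ z <> y.
Proof. unfold removeQ. rewrite filter_In. destruct (dec (z = y)); intuition; discriminate. Qed.

Lemma minQ_some (k : X -> Z) Q y : minQ k Q = Some y -> In y Q /\ forall z, In z Q -> (k y <= k z)%Z.
Proof. revert y. induction Q as [|a Q IH]; intros y H; simpl in H; [discriminate|].
  destruct (minQ k Q) as [m|] eqn:Hm.
  - specialize (IH m eq_refl). destruct (Z.leb (k a) (k m)) eqn:Hle; inversion H; subst; clear H.
    + apply Z.leb_le in Hle. split; [left; auto|]. intros z [<-|Hz]; [lia|]. specialize (proj2 IH z Hz); lia.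
    + apply Z.leb_gt in Hle. split; [right; tauto|]. intros z [<-|Hz]; [lia|]. apply (proj2 IH z Hz).
  - inversion H; subst. destruct Q as [|b Q']. split; [left; auto|]. intros z [<-|[]]; lia.
    simpl in Hm. destruct (minQ k Q'); [destruct (Z.leb _ _)|]; discriminate.
Qed.

Lemma minQ_none (k : X -> Z) Q : minQ k Q = None -> Q = [].
Proof. destruct Q as [|a Q]; simpl; auto. destruct (minQ k Q); [destruct (Z.leb _ _)|]; discriminate. Qed.

Lemma eval_agree (r r' : X -> D) t : (forall d, dep r t d -> r' d = r d) ->
  evalT r' t = evalT r t /\ (forall d, dep r' t d <-> dep r t d).
Proof. induction t as [v|y k IH]; intros H; simpl.
  - split; tauto.
  - assert (Hy : r' y = r y) by (apply H; simpl; auto). rewrite Hy.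
    destruct (IH (r y)) as [H1 H2]. { intros d Hd. apply H. simpl. auto. }
    split; auto. intros d. rewrite H2. tauto.
Qed.

Definition consist (s : state) (z : X) : Prop :=
  (forall d, dep (srho s) (f z) d -> sdom s d /\ In z (sinfl s d)) /\
  srho s z = box (srho s z) (evalT (srho s) (f z)).

Definition G (s : state) : Prop :=
  (forall z, sstable s z -> sdom s z) /\
  (forall z, In z (sQ s) -> sdom s z) /\
  (forall z, In z (sQ s) -> ~ sstable s z) /\
  (0 <= scount s)%Z /\
  (forall z, sdom s z -> - scount s < skey s z <= 0)%Z /\
  (forall z w, sdom s z -> sdom s w -> skey s z = skey s w -> z = w) /\
  (forall z w, In w (sinfl s z) -> sdom s w /\ sdom s z).

Definition Inv (E : list X) (s : state) : Prop :=
  (forall z, sdom s z -> ~ sstable s z -> In z (sQ s) \/ In z E) /\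
  (forall z, sdom s z -> sstable s z -> ~ In z E -> consist s z).

Definition IC (K : Z) (s : state) : Prop :=
  forall z w, sdom s z -> (skey s z <= K)%Z -> In w (sinfl s z) -> (skey s w <= K)%Z.

Definition NewerOK (x : X) (s : state) : Prop :=
  forall y, sdom s y -> (skey s y < skey s x)%Z -> sstable s y /\ consist s y.

Definition Evo (kx K : Z) (s s' : state) : Prop :=
  (forall z, sdom s z -> sdom s' z) /\
  (forall z, sdom s z -> skey s' z = skey s z) /\
  (forall z, sdom s z -> (kx < skey s z)%Z -> srho s' z = srho s z) /\
  (forall z, sdom s z -> (kx < skey s z)%Z -> sstable s z \/ In z (sQ s) ->
       sstable s' z \/ In z (sQ s')) /\
  (forall z, sdom s z -> (kx < skey s z)%Z -> sstable s' z ->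
       sstable s z /\ forall d, In z (sinfl s d) -> srho s' d = srho s d /\ In z (sinfl s' d)) /\
  (forall z, sdom s z -> (K < skey s z)%Z -> sstable s z -> sstable s' z) /\
  (forall K2, (K <= K2)%Z -> IC K2 s -> IC K2 s') /\
  (forall q, In q (sQ s') -> In q (sQ s) \/ (skey s' q <= K)%Z).

Definition StepA (s s' : state) : Prop := exists y, ~ sdom s y /\ s' = init rho0 y s.
Definition StepB (s s' : state) : Prop :=
  (forall z, sdom s' z <-> sdom s z) /\ (forall z, sdom s z -> skey s' z = skey s z) /\
  (forall z, srho s' z = srho s z).
Definition StepC (s s' : state) : Prop :=
  exists x, sdom s x /\ NewerOK x s /\ G s /\
    box (srho s x) (evalT (srho s) (f x)) <> srho s x /\
    (forall z, sdom s' z <-> sdom s z) /\ (forall z, sdom s z -> skey s' z = skey s z) /\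
    (forall z, srho s' z = upd (srho s) x (box (srho s x) (evalT (srho s) (f x))) z).
Definition Step (s s' : state) : Prop := StepA s s' \/ StepB s s' \/ StepC s s'.
Definition Hist := clos_refl_trans state Step.
Definition HistB := clos_refl_trans state StepB.
Definition HistAC (s s' : state) : Prop :=
  exists s1 s2, Hist s s1 /\ (StepA s1 s2 \/ StepC s1 s2) /\ Hist s2 s'.

Definition PreS (x : X) (E : list X) (K : Z) (s : state) : Prop :=
  G s /\ Inv (x :: E) s /\ sdom s x /\ ~ sstable s x /\ ~ In x (sQ s) /\
  (forall e, In e E -> sdom s e /\ (skey s x < skey s e)%Z) /\ (skey s x <= K)%Z /\
  IC K s /\ NewerOK x s.

Definition PostS (x : X) (E : list X) (K : Z) (s s' : state) : Prop :=
  G s' /\ Inv E s' /\ Evo (skey s x) K s s' /\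
  ((forall q, In q (sQ s) -> (skey s x < skey s q)%Z) ->
      forall q, In q (sQ s') -> (skey s x < skey s' q)%Z) /\
  ((HistB s s' /\ forall q, In q (sQ s') -> In q (sQ s) /\ q <> x) \/ HistAC s s').

Definition PreL (x : X) (E : list X) (K : Z) (s : state) : Prop :=
  G s /\ Inv E s /\ sdom s x /\
  (forall e, In e E -> sdom s e /\ (skey s x < skey s e)%Z) /\ (skey s x <= K)%Z /\ IC K s.

Definition PostL (x : X) (E : list X) (K : Z) (s s' : state) : Prop :=
  G s' /\ Inv E s' /\ Evo (skey s x) K s s' /\
  (forall q, In q (sQ s') -> (skey s x < skey s' q)%Z) /\ Hist s s'.


Lemma Evo_trans kx K kx' K' s s1 s2 : G s1 -> Evo kx K s s1 -> Evo kx' K' s1 s2 ->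
  (kx' <= kx)%Z -> (K' <= K)%Z -> Evo kx K s s2.
Proof.
  intros HG [a1 [b1 [c1 [d1 [e1 [f1 [g1 h1]]]]]]] [a2 [b2 [c2 [d2 [e2 [f2 [g2 h2]]]]]]] Hk HK.
  refine (conj _ (conj _ (conj _ (conj _ (conj _ (conj _ (conj _ _))))))).
  - auto.
  - intros z Hz. rewrite b2 by auto. auto.
  - intros z Hz Hk2. rewrite c2; auto. rewrite b1 by auto. lia.
  - intros z Hz Hk2 Hs. apply d2; auto. rewrite b1 by auto. lia.
  - intros z Hz Hk2 Hs. assert (H1 : (kx' < skey s1 z)%Z) by (rewrite b1 by auto; lia).
    destruct (e2 z (a1 z Hz) H1 Hs) as [Hs1 R2]. destruct (e1 z Hz Hk2 Hs1) as [Hs0 R1].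
    split; auto. intros d Hd.
    destruct (R1 d Hd) as [R1a R1b]. destruct (R2 d R1b). split; congruence.
  - intros z Hz Hk2 Hs. apply f2; auto. rewrite b1 by auto. lia.
  - intros K2 HK2 HI. apply g2. lia. apply g1; auto.
  - intros q Hq. destruct (h2 q Hq) as [Hq1|Hq1]; [|right; lia].
    destruct (h1 q Hq1) as [Hq0|Hq0]; [left; auto|right].
    destruct HG as [_ [HGQ _]]. rewrite b2 by auto. auto.
Qed.

Lemma Evo_weaken kx K kx2 K2 s s' : Evo kx K s s' -> (kx <= kx2)%Z -> (K <= K2)%Z -> Evo kx2 K2 s s'.
Proof.
  intros [a1 [b1 [c1 [d1 [e1 [f1 [g1 h1]]]]]]] Hk HK.
  refine (conj _ (conj _ (conj _ (conj _ (conj _ (conj _ (conj _ _))))))); auto.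
  - intros z Hz Hk2. apply c1; auto; lia.
  - intros z Hz Hk2 Hs. apply d1; auto; lia.
  - intros z Hz Hk2 Hs. apply (e1 z Hz); auto; lia.
  - intros z Hz Hk2 Hs. apply f1; auto; lia.
  - intros K3 HK3 HI. apply g1; auto; lia.
  - intros q Hq. destruct (h1 q Hq); auto. right; lia.
Qed.

Lemma Hist_trans s1 s2 s3 : Hist s1 s2 -> Hist s2 s3 -> Hist s1 s3.
Proof. intros; eapply rt_trans; eauto. Qed.
Lemma HistB_Hist s1 s2 : HistB s1 s2 -> Hist s1 s2.
Proof. induction 1. apply rt_step. right; left; auto. apply rt_refl. eapply rt_trans; eauto. Qed.
Lemma HistAC_Hist s1 s2 : HistAC s1 s2 -> Hist s1 s2.
Proof. intros [a [b [H1 [H2 H3]]]]. eapply rt_trans; [eauto|]. eapply rt_trans; [|eauto].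
  apply rt_step. destruct H2; [left|right;right]; auto. Qed.
Lemma HistAC_l s1 s2 s3 : Hist s1 s2 -> HistAC s2 s3 -> HistAC s1 s3.
Proof. intros H [a [b [H1 [H2 H3]]]]. exists a, b. split; [eapply rt_trans; eauto|]. auto. Qed.
Lemma HistAC_r s1 s2 s3 : HistAC s1 s2 -> Hist s2 s3 -> HistAC s1 s3.
Proof. intros [a [b [H1 [H2 H3]]]] H. exists a, b. repeat split; auto. eapply rt_trans; eauto. Qed.
Lemma Hist_B s1 s2 : StepB s1 s2 -> Hist s1 s2.
Proof. intros; apply rt_step; right; left; auto. Qed.

Inductive Path (s : state) (x : X) : tree X D -> tree X D -> Prop :=
| P0 t : Path s x t t
| PQ y k t : sdom s y -> In x (sinfl s y) -> Path s x (k (srho s y)) t -> Path s x (Query y k) t.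

Lemma Path_ret s x t v : Path s x t (Return v) ->
  evalT (srho s) t = v /\ forall d, dep (srho s) t d -> sdom s d /\ In x (sinfl s d).
Proof. intros H. remember (Return v) as r. induction H; subst; simpl.
  - split; auto. intros d [].
  - destruct IHPath as [Ha Hb]; auto. split; auto. intros d [->|Hd]; auto.
Qed.

Lemma Path_ext s x t y k : Path s x t (Query y k) -> sdom s y -> In x (sinfl s y) ->
  Path s x t (k (srho s y)).
Proof. intros H. remember (Query y k) as r. induction H; intros; subst.
  - apply PQ; auto. apply P0.
  - apply PQ; auto.
Qed.

Lemma Path_transport s s' x t0 t : Path s x t0 t ->
  (forall d, sdom s d -> In x (sinfl s d) -> sdom s' d /\ In x (sinfl s' d) /\ srho s' d = srho s d) ->
  Path s' x t0 t.
Proof. intros H HT. induction H. apply P0. destruct (HT y) as [A [B C]]; auto.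
  apply PQ; auto. rewrite C; auto. Qed.

Lemma cons_transport s s' z : consist s z ->
  (forall d, sdom s d -> In z (sinfl s d) -> sdom s' d /\ In z (sinfl s' d) /\ srho s' d = srho s d) ->
  srho s' z = srho s z -> consist s' z.
Proof. intros [Hc1 Hc2] HT Hz. 
  destruct (eval_agree (srho s) (srho s') (f z)) as [E1 E2].
  { intros d Hd. destruct (Hc1 d Hd). apply HT; auto. }
  split.
  - intros d Hd. apply E2 in Hd. destruct (Hc1 d Hd). destruct (HT d); tauto.
  - rewrite E1, Hz. auto.
Qed.

Ltac evo_split := refine (conj _ (conj _ (conj _ (conj _ (conj _ (conj _ (conj _ _))))))).

Lemma Evo_refl kx K s : Evo kx K s s.
Proof. evo_split; auto; intros z _ _ Hs; split; auto. Qed.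

Lemma Evo_qstep kx K x y s : G s -> sdom s x -> (skey s x <= K)%Z -> Evo kx K s (qstep x y s).
Proof. intros HG Hx HK. evo_split; simpl.
  - auto.
  - auto.
  - auto.
  - auto.
  - intros z _ _ Hs. split; auto. intros d Hd. split; auto.
    unfold upd. destruct (dec (d = y)); subst; simpl; auto.
  - auto.
  - intros K2 HK2 HI z w Hz Hkz Hw. simpl in *. unfold upd in Hw. destruct (dec (z = y)); subst.
    + destruct Hw as [<-|Hw]; [lia|]. eapply HI; eauto.
    + eapply HI; eauto.
  - auto.
Qed.

Lemma G_qstep x y s : G s -> sdom s x -> sdom s y -> G (qstep x y s).
Proof. intros [g1 [g2 [g3 [g4 [g5 [g6 g7]]]]]] Hx Hy. unfold G; simpl.
  refine (conj _ (conj _ (conj _ (conj _ (conj _ (conj _ _)))))); auto.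
  intros z w Hw. unfold upd in Hw. destruct (dec (z = y)); subst.
  - destruct Hw as [<-|Hw]; auto.
  - auto.
Qed.

Lemma cons_qstep x y s z : consist s z -> consist (qstep x y s) z.
Proof. intros H. apply cons_transport with (s := s); auto. intros d Hd Hz. simpl. repeat split; auto.
  unfold upd. destruct (dec (d = y)); subst; simpl; auto. Qed.

Lemma Inv_qstep E x y s : Inv E s -> Inv E (qstep x y s).
Proof. intros [i1 i2]. split; simpl; auto. intros z Hz Hs HE. apply cons_qstep; auto. Qed.

Lemma init_key y s : skey (init rho0 y s) y = (- scount s)%Z.
Proof. simpl. apply upd_eq. Qed.

Lemma G_init y s : G s -> ~ sdom s y -> G (init rho0 y s).
Proof. intros [g1 [g2 [g3 [g4 [g5 [g6 g7]]]]]] Hy. unfold G; simpl.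
  refine (conj _ (conj _ (conj _ (conj _ (conj _ (conj _ _)))))).
  - auto.
  - auto.
  - auto.
  - lia.
  - intros z [->|Hz]. rewrite upd_eq. lia. rewrite upd_neq by congruence. specialize (g5 z Hz). lia.
  - intros z w Hz Hw Hk. destruct (dec (z = y)) as [->|Hzy]; destruct (dec (w = y)) as [->|Hwy]; auto.
    + rewrite upd_eq, upd_neq in Hk by auto. destruct Hw as [->|Hw]; [congruence|]. specialize (g5 w Hw). lia.
    + rewrite upd_eq, upd_neq in Hk by auto. destruct Hz as [->|Hz]; [congruence|]. specialize (g5 z Hz). lia.
    + rewrite !upd_neq in Hk by auto. destruct Hz as [->|Hz]; [congruence|]. destruct Hw as [->|Hw]; [congruence|]. auto.
  - intros z w Hw. unfold upd in Hw. destruct (dec (z = y)); subst.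
    + destruct Hw as [<-|[]]; auto.
    + destruct (g7 z w Hw); auto.
Qed.

Lemma Evo_init kx K y s : G s -> ~ sdom s y -> (- scount s <= K)%Z -> Evo kx K s (init rho0 y s).
Proof. intros HG Hy HK. pose proof HG as [g1 [g2 [g3 [g4 [g5 [g6 g7]]]]]]. evo_split; simpl.
  - auto.
  - intros z Hz. apply upd_neq. congruence.
  - intros z Hz _. apply upd_neq. congruence.
  - auto.
  - intros z Hz _ Hs. split; auto. intros d Hd. destruct (g7 d z Hd).
    rewrite !upd_neq by congruence. auto.
  - auto.
  - intros K2 HK2 HI z w Hz Hkz Hw. simpl in *. unfold upd in Hw. destruct (dec (z = y)); subst.
    + destruct Hw as [<-|[]]. rewrite upd_eq in *. lia.
    + destruct Hz as [->|Hz]; [congruence|]. destruct (g7 z w Hw).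
      rewrite upd_neq in * by congruence. eapply HI; eauto.
  - auto.
Qed.

Lemma cons_init y s z : G s -> ~ sdom s y -> sdom s z -> consist s z -> consist (init rho0 y s) z.
Proof. intros HG Hy Hz H. pose proof HG as [g1 [g2 [g3 [g4 [g5 [g6 g7]]]]]].
  apply cons_transport with (s := s); auto.
  - intros d Hd Hzd. simpl. rewrite !upd_neq by congruence. auto.
  - simpl. apply upd_neq. congruence.
Qed.

Lemma PreS_init x E y s : G s -> Inv (x :: E) s -> sdom s x ->
  (forall e, In e E -> sdom s e) -> ~ sdom s y ->
  PreS y (x :: E) (skey (init rho0 y s) y) (init rho0 y s).
Proof. intros HG [i1 i2] Hx HE Hy. pose proof HG as [g1 [g2 [g3 [g4 [g5 [g6 g7]]]]]].
  rewrite init_key. unfold PreS. refine (conj _ (conj _ (conj _ (conj _ (conj _ (conj _ (conj _ (conj _ _)))))))).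
  - apply G_init; auto.
  - split; simpl.
    + intros z [->|Hz] Hs; [right; left; auto|]. destruct (i1 z Hz Hs); simpl; auto.
    + intros z [->|Hz] Hs HE'; [exfalso; apply Hy; auto|]. apply cons_init; auto; apply i2; simpl in *; tauto.
  - simpl; auto.
  - simpl. intro; auto.
  - simpl. intro; auto.
  - intros e He. simpl. assert (sdom s e) by (destruct He as [<-|He]; auto).
    split; auto. rewrite upd_eq, upd_neq by congruence. specialize (g5 e H). lia.
  - rewrite init_key. lia.
  - intros z w Hz Hkz Hw. simpl in *. unfold upd in *. destruct (dec (z = y)); subst.
    + destruct Hw as [<-|[]]. match goal with |- context [dec ?a] => destruct (dec a) end; [lia|congruence].
    + destruct Hz as [->|Hz]; [congruence|]. specialize (g5 z Hz). destruct (dec (y = y)); [|congruence]. lia.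
  - intros z Hz Hk. simpl in *. rewrite upd_eq in Hk. destruct Hz as [->|Hz].
    rewrite upd_eq in Hk; lia. rewrite upd_neq in Hk by congruence. specialize (g5 z Hz). lia.
Qed.

Definition EvI (x : X) (E : list X) (K : Z) (s1 : state) (t : tree X D) (sE : state) : Prop :=
  G sE /\ Inv (x :: E) sE /\ sdom sE x /\ sstable sE x /\ IC K sE /\ (skey sE x <= K)%Z /\
  (forall e, In e E -> sdom sE e /\ (skey sE x < skey sE e)%Z) /\ Path sE x (f x) t /\
  Evo (skey s1 x) K s1 sE /\ (forall q, In q (sQ sE) -> In q (sQ s1)) /\ srho sE x = srho s1 x /\
  (HistB s1 sE \/ HistAC s1 sE) /\ sdom s1 x.

Lemma Evo_s1 x K s : Evo (skey s x) K s (s1of x s).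
Proof. evo_split; simpl; auto.
  - intros z Hz Hk [Hs|Hs]; auto.
  - intros z Hz Hk [->|Hs]; [lia|]. split; auto.
Qed.

Lemma G_s1 x s : G s -> sdom s x -> ~ In x (sQ s) -> G (s1of x s).
Proof. intros HG Hx HnQ. pose proof HG as [g1 [g2 [g3 [g4 [g5 [g6 g7]]]]]].
  unfold G; simpl. refine (conj _ (conj _ (conj _ (conj _ (conj _ (conj _ _)))))); auto.
    + intros z [->|Hz]; auto.
    + intros z Hz [->|Hz']; [contradiction|]. eapply g3; eauto.
Qed.

Lemma EvI_start x E K s : PreS x E K s -> EvI x E K (s1of x s) (f x) (s1of x s).
Proof.
  intros [HG [[i1 i2] [Hx [Hns [HnQ [HE [HK [HIC HN]]]]]]]].
  pose proof HG as [g1 [g2 [g3 [g4 [g5 [g6 g7]]]]]].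
  unfold EvI. refine (conj _ (conj _ (conj _ (conj _ (conj _ (conj _ (conj _ (conj _ (conj _ (conj _ (conj _ (conj _ _)))))))))))).
  - unfold G; simpl. refine (conj _ (conj _ (conj _ (conj _ (conj _ (conj _ _)))))); auto.
    + intros z [->|Hz]; auto.
    + intros z Hz [->|Hz']; [contradiction|]. eapply g3; eauto.
  - split; simpl.
    + intros z Hz Hs. apply i1; auto.
    + intros z Hz [->|Hs] HnE; [exfalso; apply HnE; left; auto|]. apply (i2 z Hz Hs HnE).
  - exact Hx.
  - simpl; auto.
  - exact HIC.
  - exact HK.
  - exact HE.
  - apply P0.
  - apply Evo_refl.
  - auto.
  - auto.
  - left; apply rt_refl.
  - exact Hx.
Qed.

Lemma EvI_step_dom x E K s1 y k sE : EvI x E K s1 (Query y k) sE -> sdom sE y ->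
  EvI x E K s1 (k (srho sE y)) (qstep x y sE).
Proof.
  intros [HG [HI [Hx [Hs [HIC [HK [HE [HP [HEvo [HQ [Hr [HH Hx1]]]]]]]]]]]] Hy.
  unfold EvI. refine (conj _ (conj _ (conj _ (conj _ (conj _ (conj _ (conj _ (conj _ (conj _ (conj _ (conj _ (conj _ _)))))))))))).
  - apply G_qstep; auto.
  - apply Inv_qstep; auto.
  - exact Hx.
  - exact Hs.
  - destruct (@Evo_qstep (skey sE x) K x y sE HG Hx HK) as [_ [_ [_ [_ [_ [_ [HG7 _]]]]]]].
    apply HG7; auto. lia.
  - exact HK.
  - exact HE.
  - change (srho sE y) with (srho (qstep x y sE) y). apply Path_ext.
    + apply Path_transport with (s := sE); auto. intros d Hd Hxd. simpl. repeat split; auto.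
      unfold upd. destruct (dec (d = y)); subst; simpl; auto.
    + exact Hy.
    + simpl. rewrite upd_eq. left; auto.
  - apply (@Evo_trans (skey s1 x) K (skey s1 x) K s1 sE); [exact HG|exact HEvo|apply Evo_qstep; auto|lia|lia].
  - exact HQ.
  - exact Hr.
  - destruct HH as [HH|HH]; [left|right].
    + eapply rt_trans; [exact HH|]. apply rt_step. split; [tauto|split; auto].
    + eapply HistAC_r; [exact HH|]. apply Hist_B. split; [tauto|split; auto].
  - exact Hx1.
Qed.

Lemma qstep_StepB x y s : StepB s (qstep x y s).
Proof. split; [tauto|split; auto]. Qed.

Lemma PostS_Hist y E K s s' : PostS y E K s s' -> Hist s s'.
Proof. intros [_ [_ [_ [_ [[H _]|H]]]]]. apply HistB_Hist; auto. apply HistAC_Hist; auto. Qed.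

Lemma EvI_step_new x E K s1 y k sE s' : EvI x E K s1 (Query y k) sE -> ~ sdom sE y ->
  PostS y (x :: E) (skey (init rho0 y sE) y) (init rho0 y sE) s' ->
  EvI x E K s1 (k (srho s' y)) (qstep x y s').
Proof.
  intros [HG [HI [Hx [Hs [HIC [HK [HE [HP [HEvo [HQ [Hr [HH Hx1]]]]]]]]]]]] Hy Hpost.
  pose proof HG as [g1 [g2 [g3 [g4 [g5 [g6 g7]]]]]].
  pose proof Hpost as [HG' [HI' [HEvo' [HP4 HHist]]]].
  set (si := init rho0 y sE) in *.
  assert (HKy : skey si y = (- scount sE)%Z) by apply init_key.
  assert (Hkeyold : forall z, sdom sE z -> skey si z = skey sE z).
  { intros z Hz. simpl. apply upd_neq. congruence. }
  assert (HEi : Evo (skey s1 x) K sE si).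
  { apply Evo_init; auto. specialize (g5 x Hx). lia. }
  assert (HGi : G si) by (apply G_init; auto).
  pose proof HEvo' as [a' [b' [c' [d' [e' [f' [g' h']]]]]]].
  assert (Hxi : sdom si x) by (simpl; auto).
  assert (Hkx : (skey si y < skey si x)%Z) by (rewrite HKy, Hkeyold by auto; specialize (g5 x Hx); lia).
  assert (Hsx' : sstable s' x) by (apply f'; simpl; auto).
  assert (Hx' : sdom s' x) by auto.
  assert (Hy' : sdom s' y) by (apply a'; simpl; auto).
  assert (Hkx' : skey s' x = skey sE x) by (rewrite b', Hkeyold; auto).
  assert (HP' : Path s' x (f x) (Query y k)).
  { apply Path_transport with (s := sE); auto. intros d Hd Hxd.
    assert (Hdy : d <> y) by congruence.
    destruct (e' x Hxi Hkx Hsx') as [_ R]. destruct (R d) as [R1 R2].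
    { simpl. rewrite upd_neq by auto. auto. }
    split; [apply a'; simpl; auto|]. split; auto. rewrite R1. simpl. apply upd_neq; auto. }
  unfold EvI. refine (conj _ (conj _ (conj _ (conj _ (conj _ (conj _ (conj _ (conj _ (conj _ (conj _ (conj _ (conj _ _)))))))))))).
  - apply G_qstep; auto.
  - apply Inv_qstep; auto.
  - exact Hx'.
  - exact Hsx'.
  - destruct (@Evo_qstep (skey s' x) K x y s' HG' Hx') as [_ [_ [_ [_ [_ [_ [HG7 _]]]]]]].
    lia. apply HG7. lia. apply g'. rewrite HKy. specialize (g5 x Hx). lia.
    destruct HEi as [_ [_ [_ [_ [_ [_ [HGi7 _]]]]]]]. apply HGi7; auto. lia.
  - simpl. lia.
  - intros e He. destruct (HE e He) as [He1 He2]. simpl. split; [apply a'; simpl; auto|].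
    rewrite Hkx', b', Hkeyold by (simpl; auto). lia.
  - change (srho s' y) with (srho (qstep x y s') y). apply Path_ext.
    + apply Path_transport with (s := s'); auto. intros d Hd Hxd. simpl. repeat split; auto.
      unfold upd. destruct (dec (d = y)); subst; simpl; auto.
    + exact Hy'.
    + simpl. rewrite upd_eq. left; auto.
  - assert (Hk1 : skey s1 x = skey sE x).
    { destruct HEvo as [_ [b1 _]]. rewrite b1; auto. }
    apply (@Evo_trans (skey s1 x) K (skey s1 x) K s1 s'); auto.
    + apply (@Evo_trans (skey s1 x) K (skey si y) (skey si y) s1 si); auto.
      * apply (@Evo_trans (skey s1 x) K (skey s1 x) K s1 sE); auto; lia.
      * rewrite HKy, Hk1. specialize (g5 x Hx). lia.
      * rewrite HKy. specialize (g5 x Hx). lia.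
    + apply Evo_qstep; auto. lia.
    + lia.
    + lia.
  - intros q Hq. simpl in Hq. apply HQ.
    destruct (h' q Hq) as [Hq'|Hq']; [exact Hq'|].
    exfalso. assert (Hpre : forall q, In q (sQ si) -> (skey si y < skey si q)%Z).
    { intros q0 Hq0. simpl in Hq0. rewrite HKy, Hkeyold by auto. specialize (g5 q0 (g2 q0 Hq0)). lia. }
    specialize (HP4 Hpre q Hq). lia.
  - simpl. rewrite c' by (simpl; auto). simpl. rewrite upd_neq by congruence. auto.
  - right. exists sE, si. split; [destruct HH; [apply HistB_Hist|apply HistAC_Hist]; auto|].
    split; [left; exists y; auto|]. eapply rt_trans; [apply (PostS_Hist Hpost)|]. apply Hist_B, qstep_StepB.
  - exact Hx1.
Qed.

Lemma G_s3 x s2 tmp : G s2 -> sdom s2 x -> G (s3of x s2 tmp).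
Proof. intros [g1 [g2 [g3 [g4 [g5 [g6 g7]]]]]] Hx. unfold G; simpl.
  refine (conj _ (conj _ (conj _ (conj _ (conj _ (conj _ _)))))); auto.
  - intros z [Hz _]; auto.
  - intros z Hz. rewrite In_fold_addQ, In_addQ in Hz. destruct Hz as [[Hz| ->]|Hz]; auto. destruct (g7 x z Hz); auto.
  - intros z Hz [Hs HW]. rewrite In_fold_addQ, In_addQ in Hz. destruct Hz as [[Hz|Hz]|Hz]; [eapply g3; eauto| |]; apply HW; simpl; auto.
  - intros z w Hw. unfold upd in Hw. destruct (dec (z = x)); [destruct Hw|]. auto.
Qed.

Lemma Inv_s3 x E s2 tmp : G s2 -> Inv (x :: E) s2 -> Inv E (s3of x s2 tmp).
Proof. intros HG [i1 i2]. pose proof HG as [g1 [g2 [g3 [g4 [g5 [g6 g7]]]]]]. split; simpl.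
  - intros z Hz Hns. rewrite In_fold_addQ, In_addQ.
    destruct (dec (In z (x :: sinfl s2 x))) as [HW|HW]; [simpl in HW; destruct HW as [<-|HW]; tauto|].
    assert (~ sstable s2 z) by tauto. destruct (i1 z Hz H) as [Hq|[Hq|Hq]]; auto.
  - intros z Hz [Hs HW] HE. assert (Hzx : z <> x) by (intro; apply HW; left; auto).
    assert (Hc : consist s2 z) by (apply i2; auto; intros [Hq|Hq]; auto).
    apply cons_transport with (s := s2); auto.
    + intros d Hd Hzd. assert (d <> x) by (intro; subst; apply HW; right; auto).
      simpl. repeat split; auto; rewrite upd_neq; auto.
    + apply upd_neq; auto.
Qed.

Lemma Evo_s3 x K s2 tmp : G s2 -> sdom s2 x -> IC K s2 -> (skey s2 x <= K)%Z ->
  Evo (skey s2 x) K s2 (s3of x s2 tmp).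
Proof. intros HG Hx HIC HK. pose proof HG as [g1 [g2 [g3 [g4 [g5 [g6 g7]]]]]]. evo_split; simpl.
  - auto.
  - auto.
  - intros z Hz Hk. apply upd_neq. intro; subst; lia.
  - intros z Hz Hk Hs. rewrite In_fold_addQ, In_addQ.
    destruct (dec (In z (x :: sinfl s2 x))) as [HW|HW]; [simpl in HW; destruct HW as [<-|HW]; tauto|]. destruct Hs; auto.
  - intros z Hz Hk [Hs HW]. split; auto. intros d Hd.
    assert (d <> x) by (intro; subst; apply HW; right; auto).
    rewrite !upd_neq; auto.
  - intros z Hz Hk Hs. split; auto. intros [->|HW]; [lia|].
    specialize (HIC x z Hx HK HW). lia.
  - intros K2 HK2 HI z w Hz Hkz Hw. simpl in *. unfold upd in Hw. destruct (dec (z = x)); [destruct Hw|].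
    eapply HI; eauto.
  - intros q Hq. rewrite In_fold_addQ, In_addQ in Hq. destruct Hq as [[Hq| ->]|Hq]; auto.
    right. eapply HIC; eauto.
Qed.

Lemma IC_s3 K x s2 tmp : IC K s2 -> IC K (s3of x s2 tmp).
Proof. intros HI z w Hz Hkz Hw. simpl in *. unfold upd in Hw. destruct (dec (z = x)); [destruct Hw|].
  eapply HI; eauto. Qed.

Lemma NQ_of_Pre x E K s : PreS x E K s -> forall q, In q (sQ s) -> (skey s x < skey s q)%Z.
Proof. intros [HG [HI [Hx [Hns [HnQ [HE [HK [HIC HN]]]]]]]] q Hq.
  pose proof HG as [g1 [g2 [g3 [g4 [g5 [g6 g7]]]]]].
  destruct (Z.lt_total (skey s x) (skey s q)) as [H|[H|H]]; auto.
  - exfalso. assert (q = x) by (apply g6; auto). subst; contradiction.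
  - exfalso. destruct (HN q (g2 q Hq) H). eapply g3; eauto.
Qed.

Lemma Newer_at x E s2 : G s2 -> Inv (x :: E) s2 -> (forall e, In e E -> (skey s2 x < skey s2 e)%Z) ->
  (forall q, In q (sQ s2) -> (skey s2 x < skey s2 q)%Z) -> NewerOK x s2.
Proof. intros HG [i1 i2] HE HQ y Hy Hk.
  assert (HyE : ~ In y (x :: E)).
  { intros [->|Hin]; [lia|]. specialize (HE y Hin). lia. }
  assert (Hs : sstable s2 y).
  { destruct (dec (sstable s2 y)) as [H|H]; auto. destruct (i1 y Hy H) as [Hq|Hq]; [|contradiction].
    specialize (HQ y Hq). lia. }
  split; auto.
Qed.

Lemma done_branch x E K s v s2 : PreS x E K s -> EvI x E K (s1of x s) (Return v) s2 ->
  box (srho s x) v = srho s2 x -> PostS x E K s s2.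
Proof.
  intros Hpre HEv Heq. pose proof (NQ_of_Pre Hpre) as HNQ.
  destruct Hpre as [HG0 [HI0 [Hx0 [Hns0 [HnQ0 [HE0 [HK0 [HIC0 HN0]]]]]]]].
  destruct HEv as [HG [[i1 i2] [Hx [Hs [HIC [HK [HE [HP [HEvo [HQ [Hr [HH Hx1]]]]]]]]]]]].
  destruct (Path_ret HP) as [Hv Hdep].
  pose proof HEvo as [a1 [b1 _]]. simpl in b1.
  unfold PostS. refine (conj HG (conj _ (conj _ (conj _ _)))).
  - split.
    + intros z Hz Hnz. destruct (i1 z Hz Hnz) as [Hq|[Hq|Hq]]; auto. subst; contradiction.
    + intros z Hz Hsz HnE. destruct (dec (z = x)) as [->|Hzx].
      * split; auto. rewrite Hv. simpl in Hr. rewrite Hr at 2. congruence.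
      * apply i2; auto. intros [Hq|Hq]; auto.
  - apply (@Evo_trans (skey s x) K (skey s x) K s (s1of x s)); [apply G_s1; auto|apply Evo_s1|exact HEvo|lia|lia].
  - intros Hpq q Hq. simpl in HQ. specialize (HQ q Hq). specialize (Hpq q HQ).
    rewrite b1; auto. simpl. destruct HG0 as [_ [g2 _]]. auto.
  - destruct HH as [HH|HH].
    + left. split.
      * eapply rt_trans; [apply rt_step|exact HH]. split; [tauto|split; auto].
      * intros q Hq. specialize (HQ q Hq). simpl in HQ. split; auto. intro; subst; contradiction.
    + right. eapply HistAC_l; [|exact HH]. apply Hist_B. split; [tauto|split; auto].
Qed.

Lemma upd_branch x E K s v s2 : PreS x E K s -> EvI x E K (s1of x s) (Return v) s2 ->
  box (srho s x) v <> srho s2 x ->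
  PreL x E K (s3of x s2 (box (srho s x) v)) /\
  StepC s2 (s3of x s2 (box (srho s x) v)) /\ Hist s s2 /\
  (forall s', PostL x E K (s3of x s2 (box (srho s x) v)) s' -> PostS x E K s s').
Proof.
  intros Hpre HEv Hne. pose proof (NQ_of_Pre Hpre) as HNQ.
  destruct Hpre as [HG0 [HI0 [Hx0 [Hns0 [HnQ0 [HE0 [HK0 [HIC0 HN0]]]]]]]].
  destruct HEv as [HG [HI [Hx [Hs [HIC [HK [HE [HP [HEvo [HQ [Hr [HH Hx1]]]]]]]]]]]].
  destruct (Path_ret HP) as [Hv Hdep].
  pose proof HEvo as [a1 [b1 _]]. simpl in b1, Hr, HQ.
  pose proof HG0 as [g1 [g2 [g3 [g4 [g5 [g6 g7]]]]]].
  set (tmp := box (srho s x) v).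
  assert (Hkx : skey s2 x = skey s x) by auto.
  assert (HHs : Hist s s2).
  { apply rt_trans with (y := s1of x s); [apply Hist_B; split; [simpl; tauto|split; auto]|].
    destruct HH; [apply HistB_Hist|apply HistAC_Hist]; auto. }
  assert (HStepC : StepC s2 (s3of x s2 tmp)).
  { exists x. refine (conj Hx (conj _ (conj HG (conj _ (conj _ (conj _ _)))))).
    - apply Newer_at with (E := E); auto.
      + intros e He. apply HE; auto.
      + intros q Hq. specialize (HQ q Hq). rewrite (b1 x), (b1 q) by auto. apply HNQ; auto.
    - rewrite Hv, Hr. rewrite <- Hr at 2. exact Hne.
    - simpl. tauto.
    - simpl. auto.
    - intros z. simpl. rewrite Hv, Hr. reflexivity. }
  refine (conj _ (conj HStepC (conj HHs _))).
  - unfold PreL. refine (conj _ (conj _ (conj _ (conj _ (conj _ _))))).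
    + apply G_s3; auto.
    + apply Inv_s3; auto.
    + exact Hx.
    + exact HE.
    + exact HK.
    + apply IC_s3; auto.
  - intros s' [HG' [HI' [HEvo' [HP4 HHist]]]].
    unfold PostS. refine (conj HG' (conj HI' (conj _ (conj _ _)))).
    + apply (@Evo_trans (skey s x) K (skey s x) K s s2); auto; [| |lia|lia].
      * apply (@Evo_trans (skey s x) K (skey s x) K s (s1of x s)); [apply G_s1; auto|apply Evo_s1|exact HEvo|lia|lia].
      * apply (@Evo_trans (skey s x) K (skey s2 x) K s2 (s3of x s2 tmp)); [apply G_s3; auto| |exact HEvo'|lia|lia].
        rewrite <- Hkx. apply Evo_s3; auto.
    + intros _ q Hq. specialize (HP4 q Hq). simpl in HP4. lia.
    + right. exists s2, (s3of x s2 tmp). exact (conj HHs (conj (or_intror HStepC) HHist)).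
Qed.

Lemma ev_ok n x E K s1 :
  (forall y E' K' s s', PreS y E' K' s -> solve box f rho0 n y s = Done s' tt -> PostS y E' K' s s') ->
  forall t sE s2 v, EvI x E K s1 t sE -> evF (solve box f rho0 n) x t sE = Done s2 v ->
  EvI x E K s1 (Return v) s2.
Proof.
  intros IH t. induction t as [d|y k IHt]; intros sE s2 v HI Hev; simpl in Hev.
  - inversion Hev; subst; auto.
  - destruct (dec (sdom sE y)) as [Hy|Hy].
    + eapply IHt; [|exact Hev]. apply EvI_step_dom; auto.
    + destruct (solve box f rho0 n y (init rho0 y sE)) as [s' []|s'] eqn:Hs; [|discriminate].
      eapply IHt; [|exact Hev]. simpl. apply EvI_step_new with (sE := sE); auto.
      apply IH; auto.
      destruct HI as [HG [HI [Hx [_ [_ [_ [HE _]]]]]]].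
      apply PreS_init; auto. intros e He; apply HE; auto.
Qed.

Lemma part1_main : forall n,
  (forall x E K s s', PreS x E K s -> solve box f rho0 n x s = Done s' tt -> PostS x E K s s') /\
  (forall x E K s s', PreL x E K s -> loop box f rho0 n x s = Done s' tt -> PostL x E K s s').
Proof.
  induction n as [|n IH]; [split; intros; discriminate|].
  destruct IH as [IHs IHl]. split.
  - intros x E K s s' Hpre Hrun. rewrite solve_S in Hrun.
    destruct (dec (sstable s x)) as [Hsx|Hsx].
    + exfalso. destruct Hpre as [_ [_ [_ [H _]]]]. contradiction.
    + destruct (evF (solve box f rho0 n) x (f x) (s1of x s)) as [s2 v|s2] eqn:Hev; [|discriminate].
      pose proof (@ev_ok n x E K (s1of x s) IHs (f x) (s1of x s) s2 v (EvI_start Hpre) Hev) as HEv.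
      destruct (dec (box (srho s x) v = srho s2 x)) as [Heq|Hne].
      * inversion Hrun; subst. eapply done_branch; eauto.
      * destruct (upd_branch Hpre HEv Hne) as [HpreL [_ [_ Hfin]]].
        apply Hfin. eapply IHl; eauto.
  - intros x E K s s' Hpre Hrun. rewrite loop_S in Hrun.
    destruct Hpre as [HG [[i1 i2] [Hx [HE [HK HIC]]]]].
    pose proof HG as [g1 [g2 [g3 [g4 [g5 [g6 g7]]]]]].
    destruct (minQ (skey s) (sQ s)) as [y|] eqn:Hm.
    + destruct (minQ_some _ _ Hm) as [HyQ Hmin].
      destruct (Z.leb (skey s y) (skey s x)) eqn:Hle.
      * apply Z.leb_le in Hle.
        destruct (solve box f rho0 n y (popst y s)) as [s'' []|s''] eqn:Hs; [|discriminate].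
        assert (Hpre' : PreS y E K (popst y s)).
        { unfold PreS; simpl. refine (conj _ (conj _ (conj _ (conj _ (conj _ (conj _ (conj _ (conj _ _)))))))).
          - unfold G; simpl. refine (conj g1 (conj _ (conj _ (conj g4 (conj g5 (conj g6 g7)))))).
            + intros z Hz. apply In_removeQ in Hz. apply g2; tauto.
            + intros z Hz. apply In_removeQ in Hz. apply g3; tauto.
          - split; simpl.
            + intros z Hz Hns. destruct (dec (z = y)) as [->|Hzy]; [right; left; auto|].
              rewrite In_removeQ. destruct (i1 z Hz Hns); [left; split; auto|right; right; auto].
            + intros z Hz Hs' HnE. apply i2; auto; intro; apply HnE; right; auto.
          - auto.
          - apply g3; auto.
          - rewrite In_removeQ. tauto.
          - intros e He. destruct (HE e He); split; auto. lia.
          - lia.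
          - exact HIC.
          - intros z Hz Hk. simpl in Hk.
            assert (HzQ : ~ In z (sQ s)) by (intro Hq; specialize (Hmin z Hq); lia).
            assert (HzE : ~ In z E) by (intro He; destruct (HE z He); lia).
            assert (Hs' : sstable s z).
            { destruct (dec (sstable s z)) as [H|H]; auto. destruct (i1 z Hz H); contradiction. }
            split; auto. apply i2; auto. }
        pose proof (IHs _ _ _ _ _ Hpre' Hs) as [HG' [HI' [HEvo' [HP4' HH']]]].
        assert (HpreL : PreL x E K s'').
        { pose proof HEvo' as [a' [b' [_ [_ [_ [_ [g' _]]]]]]]. simpl in a', b'.
          unfold PreL. refine (conj HG' (conj HI' (conj _ (conj _ (conj _ _))))).
          - auto.
          - intros e He. destruct (HE e He). split; auto. rewrite !b'; auto.
          - rewrite b'; auto.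
          - apply g'; [lia|exact HIC]. }
        pose proof (IHl _ _ _ _ _ HpreL Hrun) as [HG2 [HI2 [HEvo2 [HP42 HH2]]]].
        pose proof HEvo' as [a' [b' _]]. simpl in a', b'.
        unfold PostL. refine (conj HG2 (conj HI2 (conj _ (conj _ _)))).
        -- apply (@Evo_trans (skey s x) K (skey s x) K s s''); auto; [| |lia|lia].
           ++ apply (@Evo_trans (skey s x) K (skey s y) K s (popst y s)).
              ** unfold G; simpl. refine (conj g1 (conj _ (conj _ (conj g4 (conj g5 (conj g6 g7)))))).
                 intros z Hz. apply In_removeQ in Hz. apply g2; tauto.
                 intros z Hz. apply In_removeQ in Hz. apply g3; tauto.
              ** evo_split; simpl; auto.
                 intros z Hz Hk [Hs0|Hs0]; auto. right. apply In_removeQ. split; auto.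
                 intro; subst; lia.
                 intros q Hq. apply In_removeQ in Hq. tauto.
              ** exact HEvo'.
              ** lia.
              ** lia.
           ++ rewrite b' in HEvo2; auto.
        -- intros q Hq. specialize (HP42 q Hq). rewrite b' in HP42; auto.
        -- eapply rt_trans; [|exact HH2]. eapply rt_trans; [|exact (PostS_Hist (conj HG' (conj HI' (conj HEvo' (conj HP4' HH')))))].
           apply Hist_B. split; [tauto|split; auto].
      * apply Z.leb_gt in Hle. inversion Hrun; subst.
        unfold PostL. refine (conj HG (conj (conj i1 i2) (conj (Evo_refl _ _ _) (conj _ (rt_refl _ _ _))))).
        intros q Hq. specialize (Hmin q Hq). lia.
    + apply minQ_none in Hm. inversion Hrun; subst.
      unfold PostL. refine (conj HG (conj (conj i1 i2) (conj (Evo_refl _ _ _) (conj _ (rt_refl _ _ _))))).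
      intros q Hq. rewrite Hm in Hq. destruct Hq.
Qed.

Lemma PreS_top x0 : PreS x0 [] 0%Z (init rho0 x0 (empty_state rho0)).
Proof.
  assert (HG0 : G (empty_state rho0)).
  { unfold G; simpl. refine (conj _ (conj _ (conj _ (conj _ (conj _ (conj _ _)))))); try tauto; try lia.
    }
  assert (HG : G (init rho0 x0 (empty_state rho0))) by (apply G_init; auto).
  assert (Hk : skey (init rho0 x0 (empty_state rho0)) x0 = 0%Z) by (simpl; rewrite upd_eq; reflexivity).
  unfold PreS. refine (conj HG (conj _ (conj _ (conj _ (conj _ (conj _ (conj _ (conj _ _)))))))).
  - split; simpl.
    + intros z [->|[]] _. right; left; auto.
    + intros z _ [].
  - simpl; auto.
  - simpl; auto.
  - simpl; auto.
  - intros e [].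
  - rewrite Hk; lia.
  - intros z w [->|[]] _ Hw. simpl in Hw. rewrite upd_eq in Hw. destruct Hw as [<-|[]]. rewrite Hk; lia.
  - intros z [->|[]] Hz. lia.
Qed.

Lemma part1 x0 n s : run box f rho0 x0 n = Done s tt ->
  partial_box_solution box f (sdom s) (srho s) /\ sdom s x0.
Proof.
  intros Hrun. unfold run in Hrun.
  destruct (proj1 (part1_main n) _ _ _ _ _ (PreS_top x0) Hrun) as [HG [[i1 i2] [HEvo [HP4 _]]]].
  assert (Hk : skey (init rho0 x0 (empty_state rho0)) x0 = 0%Z) by (simpl; rewrite upd_eq; reflexivity).
  rewrite Hk in HP4. specialize (HP4 (fun q Hq => match Hq with end)).
  pose proof HG as [g1 [g2 [g3 [g4 [g5 [g6 g7]]]]]].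
  split.
  - intros z Hz. assert (Hs : sstable s z).
    { destruct (dec (sstable s z)) as [H|H]; auto. destruct (i1 z Hz H) as [Hq|[]].
      specialize (HP4 z Hq). specialize (g5 z Hz). lia. }
    destruct (i2 z Hz Hs (fun H => H)) as [A B]. split; auto. intros y Hy; apply A; auto.
  - destruct HEvo as [a _]. apply a. simpl; auto.
Qed.
End S.

Section WFGen.
Variables (A B : Type) (P : A -> A -> B -> Prop).
Definition RelP (a' a : A) : Prop := exists c, P a' a c.

Lemma not_acc_step a : ~ Acc RelP a -> exists p : A * B, P (fst p) a (snd p) /\ ~ Acc RelP (fst p).
Proof. intros H. apply NNPP. intros H2. apply H. constructor. intros a' [c Hc].
  apply NNPP. intros H3. apply H2. exists (a', c). simpl. auto. Qed.

Lemma wf_of_noinf : ~ (exists (a : nat -> A) (b : nat -> B), forall i, P (a (S i)) (a i) (b i)) ->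
  forall a, Acc RelP a.
Proof.
  intros Hno a0. apply NNPP. intros H0.
  assert (step : forall a : {a : A | ~ Acc RelP a}, {p : A * B | P (fst p) (proj1_sig a) (snd p) /\ ~ Acc RelP (fst p)}).
  { intros [a Ha]. apply constructive_indefinite_description. apply not_acc_step; auto. }
  set (nxt := fun a : {a : A | ~ Acc RelP a} =>
        exist (fun a => ~ Acc RelP a) (fst (proj1_sig (step a))) (proj2 (proj2_sig (step a)))).
  set (sq := fix sq (n : nat) : {a : A | ~ Acc RelP a} :=
               match n with O => exist _ a0 H0 | S n => nxt (sq n) end).
  apply Hno. exists (fun n => proj1_sig (sq n)), (fun n => snd (proj1_sig (step (sq n)))).
  intros i. simpl. exact (proj1 (proj2_sig (step (sq i)))).
Qed.
End WFGen.

Section LexGen.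
Variables (I A : Type) (R : A -> A -> Prop) (key : I -> Z).
Hypothesis wfR : well_founded R.

Definition LexF (S : list I) (c' c : I -> A) : Prop :=
  exists z0, In z0 S /\ R (c' z0) (c z0) /\
    forall w, In w S -> (key z0 < key w)%Z -> c' w = c w \/ R (c' w) (c w).

Lemma exists_max (S : list I) : S <> [] -> exists m, In m S /\ forall w, In w S -> (key w <= key m)%Z.
Proof. induction S as [|a S IH]; intros H; [congruence|].
  destruct S as [|b S'].
  - exists a. split; [left; auto|]. intros w [<-|[]]; lia.
  - destruct IH as [m [Hm Hmax]]; [discriminate|].
    destruct (Z.le_gt_cases (key a) (key m)).
    + exists m. split; [right; auto|]. intros w [<-|Hw]; auto.
    + exists a. split; [left; auto|]. intros w [<-|Hw]; [lia|]. specialize (Hmax w Hw). lia.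
Qed.

Lemma lexF_acc : forall n (S : list I), length S <= n ->
  (forall z w, In z S -> In w S -> key z = key w -> z = w) -> forall c, Acc (LexF S) c.
Proof.
  induction n as [|n IHn]; intros S Hlen Hinj c.
  - destruct S; [|simpl in Hlen; lia]. constructor. intros c' [z0 [[] _]].
  - destruct S as [|a S0] eqn:HS.
    + constructor. intros c' [z0 [[] _]].
    + rewrite <- HS in *. destruct (@exists_max S ltac:(subst; discriminate)) as [m [Hm Hmax]].
      set (S' := filter (fun z => if dec (z = m) then false else true) S).
      assert (HS'in : forall z, In z S' <-> In z S /\ z <> m).
      { intros z. unfold S'. rewrite filter_In. destruct (dec (z = m)); intuition; discriminate. }
      assert (HlenS' : length S' < length S).
      { unfold S'. clear -Hm. induction S as [|b S IH]; [destruct Hm|]. simpl.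
        destruct (dec (b = m)) as [->|Hb].
        - simpl. pose proof (filter_length_le (fun z => if dec (z = m) then false else true) S). lia.
        - destruct Hm as [->|Hm]; [congruence|]. simpl. specialize (IH Hm). lia. }
      assert (IH' : forall c, Acc (LexF S') c).
      { apply IHn; [lia|]. intros z w Hz Hw; apply Hinj; apply HS'in; auto. }
      assert (Main : forall a0, Acc R a0 -> forall c, Acc (LexF S') c -> c m = a0 -> Acc (LexF S) c).
      { intros a0 Ha. induction Ha as [a0 Ha IHa]. intros c0 Hc. induction Hc as [c0 Hc IHc].
        intros Hcm. constructor. intros c' [z0 [Hz0 [HR Hold]]].
        destruct (dec (z0 = m)) as [->|Hne].
        - apply (IHa (c' m)); auto. rewrite <- Hcm; auto.
        - assert (Hk : (key z0 < key m)%Z).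
          { specialize (Hmax z0 Hz0). destruct (Z.eq_dec (key z0) (key m)); [|lia].
            exfalso. apply Hne. apply Hinj; auto. }
          destruct (Hold m Hm Hk) as [Heq|HRm].
          + apply IHc; [|congruence]. exists z0. split; [apply HS'in; auto|]. split; auto.
            intros w Hw Hkw. apply Hold; auto. apply HS'in; auto.
          + apply (IHa (c' m)); auto. rewrite <- Hcm; auto. }
      apply (Main (c m)); auto.
Qed.
End LexGen.

Section Count.
Variable (X : Type).
Definition cnt (P : X -> Prop) (L : list X) : nat :=
  length (filter (fun z => if dec (P z) then true else false) L).

Lemma cnt_ext (P Q : X -> Prop) L : (forall z, P z <-> Q z) -> cnt P L = cnt Q L.
Proof. intros H. unfold cnt. induction L as [|a L IH]; simpl; auto.
  destruct (dec (P a)), (dec (Q a)); simpl; try rewrite IH; auto; exfalso; firstorder. Qed.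

Lemma cnt_mono (P Q : X -> Prop) L : (forall z, In z L -> P z -> Q z) -> cnt P L <= cnt Q L.
Proof. intros H. unfold cnt. induction L as [|a L IH]; simpl; auto.
  assert (IH' : length (filter (fun z => if dec (P z) then true else false) L) <=
                length (filter (fun z => if dec (Q z) then true else false) L)) by (apply IH; intros; apply H; simpl; auto).
  destruct (dec (P a)), (dec (Q a)); simpl; try lia. exfalso. apply n. apply H; simpl; auto. Qed.

Lemma cnt_strict (P Q : X -> Prop) L y : (forall z, In z L -> P z -> Q z) -> In y L -> Q y -> ~ P y ->
  cnt P L < cnt Q L.
Proof. intros H Hy HQ HP. unfold cnt. induction L as [|a L IH]; [destruct Hy|]. simpl.
  assert (Hm : cnt P L <= cnt Q L) by (apply cnt_mono; intros; apply H; simpl; auto).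
  unfold cnt in Hm.
  destruct Hy as [->|Hy].
  - destruct (dec (P y)); [contradiction|]. destruct (dec (Q y)); [|contradiction]. simpl. lia.
  - assert (IH' := IH (fun z Hz => H z (or_intror Hz)) Hy).
    destruct (dec (P a)), (dec (Q a)); simpl; try lia. exfalso. apply n. apply H; simpl; auto.
Qed.
End Count.

Section P2.
Variables (X D : Type) (le : D -> D -> Prop) (wid nar : D -> D -> D) (f : X -> tree X D) (rho0 : X -> D).
Hypotheses (Hrefl : forall a, le a a) (Htrans : forall a b c, le a b -> le b c -> le a c)
  (Hwid : is_widening le wid) (Hnar : is_narrowing le nar) (Hmono : monotonic le f).
Notation bx := (boxdot le wid nar).
Notation state := (state X D).

Definition post (s : state) (y : X) : Prop := le (evalT (srho s) (f y)) (srho s y).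
Definition Phase (s : state) (z : X) : Prop :=
  forall y, sdom s y -> (skey s y <= skey s z)%Z -> post s y.
Definition comp (s : state) (z : X) : bool * D :=
  (if dec (Phase s z) then true else false, srho s z).

Definition compLt (a b : bool * D) : Prop :=
  (fst b = false /\ fst a = true) \/
  (fst b = false /\ fst a = false /\ exists c, snd a = wid (snd b) c /\ snd a <> snd b) \/
  (fst b = true /\ fst a = true /\ exists c, le c (snd b) /\ snd a = nar (snd b) c /\ snd a <> snd b).

Definition Rc := clos_trans _ compLt.

Lemma wf_compLt : well_founded compLt.
Proof.
  destruct Hwid as [_ [_ HW]]. destruct Hnar as [_ HN].
  assert (AW : forall a, Acc (RelP (fun a' a c => a' = wid a c /\ a' <> a)) a).
  { apply wf_of_noinf. intros [a [b H]]. apply HW. exists a, b. auto. }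
  assert (AN : forall a, Acc (RelP (fun a' a c => le c a /\ a' = nar a c /\ a' <> a)) a).
  { apply wf_of_noinf. intros [a [b H]]. apply HN. exists a, b. auto. }
  assert (Tt : forall d, Acc compLt (true, d)).
  { intros d. induction (AN d) as [d _ IH]. constructor. intros [p a] H.
    destruct H as [[H _]|[[H _]|[_ [Hp [c Hc]]]]]; simpl in *; try discriminate. subst p.
    apply IH. exists c. auto. }
  intros [p d]. destruct p; auto.
  induction (AW d) as [d _ IH]. constructor. intros [p a] H.
  destruct H as [[_ Hp]|[[_ [Hp [c Hc]]]|[H _]]]; simpl in *; try discriminate.
  - subst; auto.
  - subst p. apply IH. exists c. auto.
Qed.

Lemma wf_Rc : well_founded Rc.
Proof. apply wf_clos_trans, wf_compLt. Qed.

Definition Rle (a b : bool * D) : Prop := a = b \/ Rc a b.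

Definition injD (s : state) : Prop :=
  forall z w, sdom s z -> sdom s w -> skey s z = skey s w -> z = w.

Definition Lex (s' s : state) : Prop :=
  exists z0, sdom s z0 /\ Rc (comp s' z0) (comp s z0) /\
    forall w, sdom s w -> (skey s z0 < skey s w)%Z -> Rle (comp s' w) (comp s w).

Definition SameDK (s' s : state) : Prop :=
  (forall z, sdom s' z <-> sdom s z) /\ (forall z, sdom s z -> skey s' z = skey s z).

Definition Ord (s' s : state) : Prop :=
  ((forall z, sdom s z -> sdom s' z) /\ exists y, sdom s' y /\ ~ sdom s y) \/
  (SameDK s' s /\ injD s /\ Lex s' s).

Definition Eqm (s' s : state) : Prop := SameDK s' s /\ forall z, srho s' z = srho s z.

Lemma Rle_trans a b c : Rle a b -> Rle b c -> Rle a c.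
Proof. intros [->|H1] [->|H2]; unfold Rle; auto. right; eapply t_trans; eauto. Qed.
Lemma Rle_Rc a b c : Rle a b -> Rc b c -> Rc a c.
Proof. intros [->|H1] H2; auto. eapply t_trans; eauto. Qed.
Lemma Rc_Rle a b c : Rc a b -> Rle b c -> Rc a c.
Proof. intros H1 [->|H2]; auto. eapply t_trans; eauto. Qed.

Lemma post_ext s s' y : (forall z, srho s' z = srho s z) -> (post s' y <-> post s y).
Proof. intros Hr. unfold post. rewrite Hr.
  destruct (eval_agree bx f rho0 (srho s) (srho s') (f y)) as [E _]; [intros; auto|]. rewrite E. tauto. Qed.

Lemma Eqm_comp s' s z : Eqm s' s -> sdom s z -> comp s' z = comp s z.
Proof. intros [[Hd Hk] Hr] Hz. unfold comp. rewrite Hr. f_equal.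
  assert (Phase s' z <-> Phase s z).
  { unfold Phase. split; intros H y Hy Hky.
    - apply (post_ext s s' y Hr). apply H. apply Hd; auto. rewrite !Hk; auto.
    - assert (Hy' : sdom s y) by (apply Hd; auto). apply (post_ext s s' y Hr).
      apply H; auto. rewrite <- !Hk; auto. }
  destruct (dec (Phase s' z)), (dec (Phase s z)); tauto.
Qed.

Lemma Eqm_refl s : Eqm s s.
Proof. split; [split; [tauto|auto]|auto]. Qed.

Lemma Eqm_trans s3 s2 s1 : Eqm s3 s2 -> Eqm s2 s1 -> Eqm s3 s1.
Proof. intros [[d2 k2] r2] [[d1 k1] r1]. split; [split|].
  - intros z. rewrite d2, d1. tauto.
  - intros z Hz. rewrite k2, k1; auto. apply d1; auto.
  - intros z. rewrite r2; auto.
Qed.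

Lemma SameDK_trans s3 s2 s1 : SameDK s3 s2 -> SameDK s2 s1 -> SameDK s3 s1.
Proof. intros [d2 k2] [d1 k1]. split.
  - intros z. rewrite d2, d1. tauto.
  - intros z Hz. rewrite k2, k1; auto. apply d1; auto.
Qed.

Lemma injD_same s' s : SameDK s' s -> injD s -> injD s'.
Proof. intros [d k] Hi z w Hz Hw Hk. apply d in Hz. apply d in Hw. rewrite !k in Hk by auto. auto. Qed.

Lemma Ord_dom s' s : Ord s' s -> forall z, sdom s z -> sdom s' z.
Proof. intros [[H _]|[[d _] _]] z Hz; auto. apply d; auto. Qed.

Lemma Ord_trans s3 s2 s1 : Ord s3 s2 -> Ord s2 s1 -> Ord s3 s1.
Proof.
  intros H32 H21. pose proof (Ord_dom H32) as D32. pose proof (Ord_dom H21) as D21.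
  destruct H21 as [[_ [y [Hy1 Hy2]]]|[S21 [I1 L21]]].
  - left. split; [auto|]. exists y. split; auto.
  - destruct H32 as [[_ [y [Hy1 Hy2]]]|[S32 [I2 L32]]].
    + left. split; [auto|]. exists y. split; auto.
    + right. split; [eapply SameDK_trans; eauto|]. split; auto.
      destruct S21 as [d21 k21]. destruct S32 as [d32 k32].
      destruct L21 as [z1 [Hz1 [R1 O1]]]. destruct L32 as [z2 [Hz2 [R2 O2]]].
      assert (Hz2' : sdom s1 z2) by (apply d21; auto).
      assert (Hz1' : sdom s2 z1) by (apply d21; auto).
      rewrite k21 in O2 by auto.
      assert (O2' : forall w, sdom s1 w -> (skey s1 z2 < skey s1 w)%Z -> Rle (comp s3 w) (comp s2 w)).
      { intros w Hw Hk. apply O2; [apply d21; auto|]. rewrite k21; auto. }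
      destruct (Z.lt_total (skey s1 z1) (skey s1 z2)) as [Hl|[He|Hl]].
      * exists z2. split; auto. split.
        -- apply Rc_Rle with (b := comp s2 z2); [exact R2|]. apply O1; auto.
        -- intros w Hw Hkw. assert (sdom s2 w) by (apply d21; auto).
           apply Rle_trans with (b := comp s2 w); [apply O2'; auto|].
           apply O1; auto; lia.
      * assert (z1 = z2) by (apply I1; auto). subst z2.
        exists z1. split; auto. split; [eapply t_trans; eauto|].
        intros w Hw Hkw. assert (sdom s2 w) by (apply d21; auto).
        apply Rle_trans with (b := comp s2 w); [apply O2'; auto|]. apply O1; auto.
      * exists z1. split; auto. split.
        -- apply Rle_Rc with (b := comp s2 z1); [|exact R1]. apply O2'; auto.
        -- intros w Hw Hkw. assert (sdom s2 w) by (apply d21; auto).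
           apply Rle_trans with (b := comp s2 w); [apply O2'; auto; lia|].
           apply O1; auto.
Qed.

Lemma Ord_Eqm s2 s1 s0 : Ord s2 s1 -> Eqm s1 s0 -> Ord s2 s0.
Proof.
  intros H21 H10. pose proof H10 as [[d10 k10] r10].
  destruct H21 as [[Dd [y [Hy1 Hy2]]]|[S21 [I1 [z1 [Hz1 [R1 O1]]]]]].
  - left. split; [intros z Hz; apply Dd, d10; auto|]. exists y. split; auto. rewrite <- d10; auto.
  - right. split; [eapply SameDK_trans; eauto; apply H10|]. split.
    + intros z w Hz Hw Hk. apply I1; try apply d10; auto. rewrite !k10; auto.
    + exists z1. assert (Hz0 : sdom s0 z1) by (apply d10; auto). split; auto.
      rewrite <- (@Eqm_comp _ _ _ H10 Hz0). split; auto. intros w Hw Hkw.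
      rewrite <- (@Eqm_comp _ _ _ H10 Hw). apply O1. apply d10; auto. rewrite !k10; auto.
Qed.

Lemma Eqm_Ord s2 s1 s0 : Eqm s2 s1 -> Ord s1 s0 -> Ord s2 s0.
Proof.
  intros H21 H10. pose proof H21 as [[d21 k21] r21].
  destruct H10 as [[Dd [y [Hy1 Hy2]]]|[S10 [I0 [z1 [Hz1 [R1 O1]]]]]].
  - left. split; [intros z Hz; apply d21, Dd; auto|]. exists y. split; auto. apply d21; auto.
  - right. split; [eapply SameDK_trans; eauto; apply H21|]. split; auto.
    destruct S10 as [d10 k10].
    exists z1. split; auto. rewrite (@Eqm_comp _ _ _ H21) by (apply d10; auto). split; auto.
    intros w Hw Hkw. rewrite (@Eqm_comp _ _ _ H21) by (apply d10; auto). apply O1; auto.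
Qed.

Definition Le (s' s : state) : Prop := Ord s' s \/ Eqm s' s.

Lemma Le_trans s3 s2 s1 : Le s3 s2 -> Le s2 s1 -> Le s3 s1.
Proof. intros [H|H] [H'|H']; unfold Le.
  - left; eapply Ord_trans; eauto.
  - left; eapply Ord_Eqm; eauto.
  - left; eapply Eqm_Ord; eauto.
  - right; eapply Eqm_trans; eauto.
Qed.
Lemma Le_Ord s3 s2 s1 : Le s3 s2 -> Ord s2 s1 -> Ord s3 s1.
Proof. intros [H|H] H'. eapply Ord_trans; eauto. eapply Eqm_Ord; eauto. Qed.
Lemma Ord_Le s3 s2 s1 : Ord s3 s2 -> Le s2 s1 -> Ord s3 s1.
Proof. intros H [H'|H']. eapply Ord_trans; eauto. eapply Ord_Eqm; eauto. Qed.

Lemma post_of_cons s y : consist bx f s y -> post s y.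
Proof. intros [_ H]. unfold post. unfold boxdot in H.
  destruct (dec (le (evalT (srho s) (f y)) (srho s y))) as [Hl|Hl]; auto.
  rewrite H. destruct Hwid as [_ [Hw _]]. apply Hw. Qed.

Lemma StepC_Ord s s' : StepC bx f s s' -> Ord s' s.
Proof.
  intros [x [Hx [HN [HG [Hne [Hd [Hk Hr]]]]]]].
  pose proof HG as [g1 [g2 [g3 [g4 [g5 [g6 g7]]]]]].
  set (v := evalT (srho s) (f x)) in *.
  assert (HSD : SameDK s' s) by (split; auto).
  right. split; [exact HSD|]. split; [exact g6|]. exists x. split; [exact Hx|].
  assert (Hrw : forall w, w <> x -> srho s' w = srho s w) by (intros w Hw; rewrite Hr; apply upd_neq; auto).
  assert (Hrx : srho s' x = bx (srho s x) v) by (rewrite Hr; apply upd_eq).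
  assert (Holdne : forall w, sdom s w -> (skey s x < skey s w)%Z -> w <> x) by (intros w _ Hkw ->; lia).
  unfold boxdot in Hrx, Hne.
  destruct (dec (le v (srho s x))) as [Hl|Hl].
  -
    destruct Hnar as [Hn _]. destruct (Hn (srho s x) v Hl) as [Hn1 Hn2].
    assert (Hmon : forall z, le (srho s' z) (srho s z)).
    { intros z. destruct (dec (z = x)) as [->|Hzx]. rewrite Hrx; auto. rewrite Hrw; auto. }
    assert (Hpost' : forall y, y <> x -> post s y -> post s' y).
    { intros y Hyx Hp. unfold post in *. rewrite Hrw by auto.
      eapply Htrans; [apply (Hmono y (srho s') (srho s) Hmon)|exact Hp]. }
    assert (Hpx : post s' x).
    { unfold post. rewrite Hrx. eapply Htrans; [apply (Hmono x (srho s') (srho s) Hmon)|exact Hn1]. }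
    assert (Hpost : forall y, post s y -> post s' y).
    { intros y Hp. destruct (dec (y = x)) as [->|Hyx]; auto. }
    assert (HPh : Phase s' x).
    { intros y Hy Hky. apply Hd in Hy. rewrite !Hk in Hky by auto.
      destruct (dec (y = x)) as [->|Hyx]; auto.
      assert (Hlt : (skey s y < skey s x)%Z).
      { destruct (Z.eq_dec (skey s y) (skey s x)); [|lia]. exfalso; apply Hyx; apply g6; auto. }
      apply Hpost. apply post_of_cons. apply (HN y Hy Hlt). }
    split.
    + apply t_step. unfold comp. destruct (dec (Phase s' x)) as [_|C]; [|contradiction].
      destruct (dec (Phase s x)); simpl; [right; right|left; auto].
      split; auto. split; auto. exists v. rewrite Hrx. auto.
    + intros w Hw Hkw. specialize (Holdne w Hw Hkw). unfold comp. rewrite Hrw by auto.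
      destruct (dec (Phase s w)) as [Ph|Ph].
      * assert (Phase s' w).
        { intros y Hy Hky. apply Hd in Hy. rewrite !Hk in Hky by auto. apply Hpost. apply Ph; auto. }
        destruct (dec (Phase s' w)); [left; auto|contradiction].
      * destruct (dec (Phase s' w)); [right; apply t_step; left; auto|left; auto].
  -
    assert (HnPx : ~ Phase s x) by (intros Ph; apply Hl; apply (Ph x Hx); lia).
    split.
    + apply t_step. unfold comp. destruct (dec (Phase s x)) as [C|_]; [contradiction|].
      destruct (dec (Phase s' x)); simpl; [left; auto|right; left].
      split; auto. split; auto. exists v. rewrite Hrx. auto.
    + intros w Hw Hkw. specialize (Holdne w Hw Hkw). unfold comp. rewrite Hrw by auto.
      assert (~ Phase s w) by (intros Ph; apply Hl; apply (Ph x Hx); lia).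
      destruct (dec (Phase s w)) as [Ph|_]; [contradiction|].
      destruct (dec (Phase s' w)); [right; apply t_step; left; auto|left; auto].
Qed.

Lemma Step_Le s s' : Step bx f rho0 s s' -> Le s' s.
Proof. intros [[y [Hy ->]]|[HB|HC]].
  - left. left. split; [simpl; auto|]. exists y. simpl; auto.
  - right. destruct HB as [a [b c]]. split; [split|]; auto.
  - left. apply StepC_Ord; auto.
Qed.

Lemma Hist_Le s s' : Hist bx f rho0 s s' -> Le s' s.
Proof. induction 1. apply Step_Le; auto. right; apply Eqm_refl. eapply Le_trans; eauto. Qed.

Lemma HistB_Eqm s s' : HistB s s' -> Eqm s' s.
Proof. induction 1. destruct H as [a [b c]]; split; [split|]; auto. apply Eqm_refl. eapply Eqm_trans; eauto. Qed.

Lemma HistAC_Ord s s' : HistAC bx f rho0 s s' -> Ord s' s.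
Proof. intros [s1 [s2 [H1 [H2 H3]]]].
  apply Hist_Le in H1. apply Hist_Le in H3.
  assert (Ord s2 s1).
  { destruct H2 as [[y [Hy ->]]|HC]. left. split; [simpl; auto|]. exists y; simpl; auto.
    apply StepC_Ord; auto. }
  eapply Le_Ord; [exact H3|]. eapply Ord_Le; eauto.
Qed.

Definition domL (L : list X) (s : state) : Prop := forall z, sdom s z -> In z L.
Definition OrdL (L : list X) (s' s : state) : Prop := Ord s' s /\ domL L s' /\ injD s'.
Definition mdom (L : list X) (s : state) : nat := cnt (fun z => ~ sdom s z) L.

Lemma Acc_OrdL L : forall s, domL L s -> injD s -> Acc (OrdL L) s.
Proof.
  intros s. remember (mdom L s) as n eqn:Hn. revert s Hn.
  induction n as [n IHn] using (well_founded_induction lt_wf).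
  intros s Hn HdL Hinj.
  set (S := filter (fun z => if dec (sdom s z) then true else false) L).
  assert (HS : forall z, In z S <-> In z L /\ sdom s z).
  { intros z. unfold S. rewrite filter_In. destruct (dec (sdom s z)); intuition; discriminate. }
  assert (HA : forall c, Acc (LexF Rc (skey s) S) c).
  { intros c. apply (@lexF_acc X (bool * D) Rc (skey s) wf_Rc (length S)); auto.
    intros z w Hz Hw Hk. apply HS in Hz. apply HS in Hw. apply Hinj; tauto. }
  assert (Claim : forall c, Acc (LexF Rc (skey s) S) c -> forall s1, comp s1 = c -> SameDK s1 s ->
            Acc (OrdL L) s1).
  { intros c Hc. induction Hc as [c _ IHc]. intros s1 Hc1 HSD. constructor.
    intros s2 [HO [HdL2 Hinj2]].
    destruct HO as [[Hsub [y [Hy2 Hy1]]]|[HSD21 [Hinj1 [z0 [Hz0 [HR Hold]]]]]].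
    - apply (IHn (mdom L s2)); auto.
      assert (E1 : mdom L s1 = mdom L s).
      { unfold mdom. apply cnt_ext. intros z. destruct HSD as [Hd _]. rewrite Hd. tauto. }
      rewrite Hn, <- E1. unfold mdom. apply cnt_strict with (y := y); auto.
    - apply (IHc (comp s2)); auto.
      + rewrite <- Hc1. exists z0. destruct HSD as [Hd Hk].
        assert (Hz0S : In z0 S) by (apply HS; split; [apply HdL; apply Hd; auto|apply Hd; auto]).
        refine (conj Hz0S (conj HR _)).
        intros w Hw Hkw. apply HS in Hw. destruct Hw as [_ Hw]. apply Hold; [apply Hd; auto|].
        rewrite !Hk; auto. apply Hd; auto.
      + eapply SameDK_trans; eauto. }
  apply (Claim (comp s)); auto. split; [tauto|auto].
Qed.

Lemma dom_mono : forall n,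
  (forall x s z, sdom s z -> sdom (res_state (solve bx f rho0 n x s)) z) /\
  (forall x s z, sdom s z -> sdom (res_state (loop bx f rho0 n x s)) z).
Proof.
  induction n as [|n [IHs IHl]]; [split; simpl; auto|].
  assert (Hev : forall x t s z, sdom s z -> sdom (res_state (evF rho0 (solve bx f rho0 n) x t s)) z).
  { intros x t. induction t as [d|y k IHt]; intros s z Hz; simpl; auto.
    destruct (dec (sdom s y)).
    - apply IHt. simpl. auto.
    - assert (H1 := IHs y (init rho0 y s) z (or_intror Hz)).
      destruct (solve bx f rho0 n y (init rho0 y s)) as [s' []|s']; simpl in *; auto;
      apply IHt; simpl; auto. }
  split.
  - intros x s z Hz. rewrite solve_S. destruct (dec (sstable s x)); simpl; auto.
    assert (H1 := Hev x (f x) (s1of x s) z Hz).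
    destruct (evF rho0 (solve bx f rho0 n) x (f x) (s1of x s)) as [s2 v|s2]; simpl in *; auto.
    destruct (dec _); simpl; auto; apply IHl; simpl; auto.
  - intros x s z Hz. rewrite loop_S. destruct (minQ (skey s) (sQ s)) as [y|]; simpl; auto.
    destruct (Z.leb _ _); simpl; auto.
    assert (H1 := IHs y (popst y s) z Hz).
    destruct (solve bx f rho0 n y (popst y s)) as [s'' []|s'']; simpl in *; auto.
Qed.

Lemma In_removeQ2 (Q : list X) y z : In z (removeQ y Q) <-> In z Q /\ z <> y.
Proof. apply (In_removeQ bx f rho0). Qed.
Lemma minQ_some2 (k : X -> Z) Q y : minQ k Q = Some y -> In y Q /\ forall z, In z Q -> (k y <= k z)%Z.
Proof. apply (minQ_some bx f rho0). Qed.

Lemma PreS_pop x E K s y : PreL bx f x E K s -> minQ (skey s) (sQ s) = Some y ->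
  (skey s y <= skey s x)%Z -> PreS bx f y E K (popst y s).
Proof.
  intros [HG [[i1 i2] [Hx [HE [HK HIC]]]]] Hm Hle.
  pose proof HG as [g1 [g2 [g3 [g4 [g5 [g6 g7]]]]]].
  destruct (minQ_some2 _ _ Hm) as [HyQ Hmin].
  unfold PreS; simpl. refine (conj _ (conj _ (conj _ (conj _ (conj _ (conj _ (conj _ (conj _ _)))))))).
  - unfold G; simpl. refine (conj g1 (conj _ (conj _ (conj g4 (conj g5 (conj g6 g7)))))).
    + intros z Hz. apply In_removeQ2 in Hz. apply g2; tauto.
    + intros z Hz. apply In_removeQ2 in Hz. apply g3; tauto.
  - split; simpl.
    + intros z Hz Hns. destruct (dec (z = y)) as [->|Hzy]; [right; left; auto|].
      rewrite In_removeQ2. destruct (i1 z Hz Hns); [left; split; auto|right; right; auto].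
    + intros z Hz Hs' HnE. apply i2; auto; intro; apply HnE; right; auto.
  - auto.
  - apply g3; auto.
  - rewrite In_removeQ2. tauto.
  - intros e He. destruct (HE e He); split; auto. lia.
  - lia.
  - exact HIC.
  - intros z Hz Hk. simpl in Hk.
    assert (HzQ : ~ In z (sQ s)) by (intro Hq; specialize (Hmin z Hq); lia).
    assert (HzE : ~ In z E) by (intro He; destruct (HE z He); lia).
    assert (Hs' : sstable s z).
    { destruct (dec (sstable s z)) as [H|H]; auto. destruct (i1 z Hz H); contradiction. }
    split; auto. apply i2; auto.
Qed.

Lemma PreL_after_pop x E K s y s'' : PreL bx f x E K s -> (skey s y <= skey s x)%Z ->
  PostS bx f rho0 y E K (popst y s) s'' -> PreL bx f x E K s''.
Proof.
  intros [HG [[i1 i2] [Hx [HE [HK HIC]]]]] Hle [HG' [HI' [HEvo' _]]].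
  pose proof HEvo' as [a' [b' [_ [_ [_ [_ [g' _]]]]]]]. simpl in a', b'.
  unfold PreL. refine (conj HG' (conj HI' (conj _ (conj _ (conj _ _))))).
  - auto.
  - intros e He. destruct (HE e He). split; auto. rewrite !b'; auto.
  - rewrite b'; auto.
  - apply g'; [lia|exact HIC].
Qed.

Lemma ev_dom_mono n x t s z : sdom s z -> sdom (res_state (evF rho0 (solve bx f rho0 n) x t s)) z.
Proof.
  revert s. induction t as [d|y k IHt]; intros s Hz; simpl; auto.
  destruct (dec (sdom s y)).
  - apply IHt. simpl. auto.
  - assert (H1 := proj1 (dom_mono n) y (init rho0 y s) z (or_intror Hz)).
    destruct (solve bx f rho0 n y (init rho0 y s)) as [s' []|s']; simpl in *; auto;
    apply IHt; simpl; auto.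
Qed.

Lemma evF_dom sv x y k s : sdom s y ->
  evF rho0 sv x (Query y k) s = evF rho0 sv x (k (srho s y)) (qstep x y s).
Proof. intros H. simpl. destruct (dec (sdom s y)); [reflexivity|contradiction]. Qed.

Lemma evF_new sv x y k s : ~ sdom s y ->
  evF rho0 sv x (Query y k) s =
  match sv y (init rho0 y s) with
  | OutOfFuel s' => OutOfFuel s'
  | Done s' _ => evF rho0 sv x (k (srho s' y)) (qstep x y s')
  end.
Proof. intros H. simpl. destruct (dec (sdom s y)); [contradiction|reflexivity]. Qed.

Lemma notdomL_mono L s1 s2 : ~ domL L s1 -> (forall z, sdom s1 z -> sdom s2 z) -> ~ domL L s2.
Proof. intros H1 H HL. apply H1. intros z Hz. apply HL. auto. Qed.

Definition TS L x s := (exists N s', forall m, N <= m -> solve bx f rho0 m x s = Done s' tt) \/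
  (exists N, forall m, N <= m -> ~ domL L (res_state (solve bx f rho0 m x s))).
Definition TL L x s := (exists N s', forall m, N <= m -> loop bx f rho0 m x s = Done s' tt) \/
  (exists N, forall m, N <= m -> ~ domL L (res_state (loop bx f rho0 m x s))).
Definition TE L x t s := (exists N s2 v, forall m, N <= m -> evF rho0 (solve bx f rho0 m) x t s = Done s2 v) \/
  (exists N, forall m, N <= m -> ~ domL L (res_state (evF rho0 (solve bx f rho0 m) x t s))).

Lemma G_injD s : G s -> injD s.
Proof. intros [_ [_ [_ [_ [_ [H _]]]]]]. exact H. Qed.

Lemma Eqm_domL L s' s : Eqm s' s -> domL L s -> domL L s'.
Proof. intros [[Hd _] _] H z Hz. apply H, Hd; auto. Qed.

Lemma term_TE L s0 x E K
  (IHo : forall s', Ord s' s0 -> domL L s' -> injD s' -> forall y E' K', PreS bx f y E' K' s' -> TS L y s') :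
  forall t sE, EvI bx f rho0 x E K (s1of x s0) t sE -> Le sE s0 -> domL L sE -> TE L x t sE.
Proof.
  intros t. induction t as [d|y k IHt]; intros sE HEv HLe HdLE.
  - left. exists 0, sE, d. intros; reflexivity.
  - destruct (dec (sdom sE y)) as [Hy|Hy].
    + assert (HLe' : Le (qstep x y sE) s0).
      { eapply Le_trans; [|exact HLe]. right. split; [split|]; simpl; auto; tauto. }
      assert (HdL' : domL L (qstep x y sE)) by (intros z Hz; apply HdLE; auto).
      destruct (IHt (srho sE y) (qstep x y sE) (EvI_step_dom HEv Hy) HLe' HdL') as [[N [s2 [v HN]]]|[N HN]].
      * left. exists N, s2, v. intros m Hm. rewrite evF_dom by auto. auto.
      * right. exists N. intros m Hm. rewrite evF_dom by auto. auto.
    + destruct HEv as [HG [HI [Hx [Hs [HIC [HK [HE HEvrest]]]]]]] eqn:HEvE.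
      set (si := init rho0 y sE).
      destruct (dec (In y L)) as [HyL|HyL].
      * assert (Hpre' : PreS bx f y (x :: E) (skey si y) si).
        { apply PreS_init; auto. intros e He; apply HE; auto. }
        assert (Hord : Ord si s0).
        { eapply Ord_Le; [|exact HLe]. left. split; [simpl; auto|]. exists y; simpl; auto. }
        assert (HdLi : domL L si) by (intros z [->|Hz]; auto).
        assert (Hinji : injD si) by (apply G_injD; apply G_init; auto).
        destruct (IHo si Hord HdLi Hinji y (x :: E) _ Hpre') as [[N1 [s' HN1]]|[N1 HN1]].
        -- assert (Hpost := proj1 (part1_main bx f rho0 N1) _ _ _ _ _ Hpre' (HN1 N1 (le_n _))).
           assert (HEv' := EvI_step_new HEv Hy Hpost).
           destruct (dec (domL L s')) as [HdL'|HdL'].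
           ++ assert (HLe' : Le (qstep x y s') s0).
              { eapply Le_trans; [|left; exact Hord].
                eapply Le_trans; [|apply Hist_Le; exact (PostS_Hist Hpost)].
                right. split; [split|]; simpl; auto; tauto. }
              destruct (IHt (srho s' y) (qstep x y s') HEv' HLe' HdL') as [[N2 [s2 [v HN2]]]|[N2 HN2]].
              ** left. exists (max N1 N2), s2, v. intros m Hm. rewrite evF_new by auto. fold si.
                 rewrite HN1 by lia. apply HN2; lia.
              ** right. exists (max N1 N2). intros m Hm. rewrite evF_new by auto. fold si.
                 rewrite HN1 by lia. apply HN2; lia.
           ++ right. exists N1. intros m Hm. rewrite evF_new by auto. fold si. rewrite HN1 by lia.
              eapply notdomL_mono; [exact HdL'|]. intros z Hz. apply ev_dom_mono. simpl; auto.
        -- right. exists N1. intros m Hm. rewrite evF_new by auto. fold si. specialize (HN1 m Hm).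
           destruct (solve bx f rho0 m y si) as [s' []|s'] eqn:Es; simpl in *; auto.
           eapply notdomL_mono; [exact HN1|]. intros z Hz. apply ev_dom_mono. simpl; auto.
      * right. exists 0. intros m _. intros HdLr. apply HyL. apply HdLr.
        rewrite evF_new by auto. fold si.
        assert (H1 := proj1 (dom_mono m) y si y (or_introl eq_refl)).
        destruct (solve bx f rho0 m y si) as [s' []|s'] eqn:Es; simpl in *; auto.
        apply ev_dom_mono. simpl; auto.
Qed.

Lemma term_main L : forall s, Acc (OrdL L) s ->
  (forall s0, Eqm s0 s -> domL L s0 -> forall x E K, PreS bx f x E K s0 -> TS L x s0) /\
  (forall s0, Eqm s0 s -> domL L s0 -> forall x E K, PreL bx f x E K s0 -> TL L x s0).
Proof.
  intros s HA. induction HA as [s _ IH].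
  assert (IHo : forall s', Ord s' s -> domL L s' -> injD s' ->
     (forall y E K, PreS bx f y E K s' -> TS L y s') /\ (forall y E K, PreL bx f y E K s' -> TL L y s')).
  { intros s' Ho Hd Hi. destruct (IH s' (conj Ho (conj Hd Hi))) as [A B].
    split; intros; [eapply A|eapply B]; eauto; apply Eqm_refl. }
  assert (HTS : forall s0, Eqm s0 s -> domL L s0 -> forall x E K, PreS bx f x E K s0 -> TS L x s0).
  { intros s0 Heq HdL x E K Hpre.
    assert (IHo0 : forall s', Ord s' s0 -> domL L s' -> injD s' -> forall y E' K', PreS bx f y E' K' s' -> TS L y s').
    { intros s' Ho Hd Hi. apply (proj1 (IHo s' (Ord_Eqm Ho Heq) Hd Hi)). }
    assert (Hns : ~ sstable s0 x) by (destruct Hpre as [_ [_ [_ [H _]]]]; exact H).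
    assert (HLe1 : Le (s1of x s0) s0) by (right; split; [split|]; simpl; auto; tauto).
    assert (HdL1 : domL L (s1of x s0)) by (intros z Hz; apply HdL; auto).
    destruct (@term_TE L s0 x E K IHo0 (f x) (s1of x s0) (EvI_start rho0 Hpre) HLe1 HdL1) as [[N [s2 [v HN]]]|[N HN]].
    - assert (HEv := ev_ok N (proj1 (part1_main bx f rho0 N)) (EvI_start rho0 Hpre) (HN N (le_n _))).
      destruct (dec (bx (srho s0 x) v = srho s2 x)) as [Heq2|Hne].
      + left. exists (S N), s2. intros m Hm. destruct m as [|m]; [lia|]. rewrite solve_S.
        destruct (dec (sstable s0 x)) as [C|_]; [contradiction|]. rewrite HN by lia.
        destruct (dec _) as [_|C]; [reflexivity|contradiction].
      + destruct (upd_branch Hpre HEv Hne) as [HpreL [HC [HH _]]].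
        set (s3 := s3of x s2 (bx (srho s0 x) v)) in *.
        assert (Hord3 : Ord s3 s) by (eapply Ord_Eqm; [|exact Heq]; eapply Ord_Le; [apply StepC_Ord; exact HC|apply Hist_Le; exact HH]).
        destruct (dec (domL L s3)) as [HdL3|HdL3].
        * destruct (proj2 (IHo s3 Hord3 HdL3 (G_injD (proj1 HpreL))) x E K HpreL) as [[N2 [s' HN2]]|[N2 HN2]].
          -- left. exists (S (max N N2)), s'. intros m Hm. destruct m as [|m]; [lia|]. rewrite solve_S.
             destruct (dec (sstable s0 x)) as [C|_]; [contradiction|]. rewrite HN by lia.
             destruct (dec _) as [C|_]; [contradiction|]. apply HN2; lia.
          -- right. exists (S (max N N2)). intros m Hm. destruct m as [|m]; [lia|]. rewrite solve_S.
             destruct (dec (sstable s0 x)) as [C|_]; [contradiction|]. rewrite HN by lia.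
             destruct (dec _) as [C|_]; [contradiction|]. apply HN2; lia.
        * right. exists (S N). intros m Hm. destruct m as [|m]; [lia|]. rewrite solve_S.
          destruct (dec (sstable s0 x)) as [C|_]; [contradiction|]. rewrite HN by lia.
          destruct (dec _) as [C|_]; [contradiction|].
          eapply notdomL_mono; [exact HdL3|]. intros z Hz. apply (proj2 (dom_mono m)); auto.
    - right. exists (S N). intros m Hm. destruct m as [|m]; [lia|]. rewrite solve_S.
      destruct (dec (sstable s0 x)) as [C|_]; [contradiction|].
      specialize (HN m ltac:(lia)).
      destruct (evF rho0 (solve bx f rho0 m) x (f x) (s1of x s0)) as [s2 v|s2] eqn:Ee; simpl in *; auto.
      destruct (dec _); simpl; auto.
      eapply notdomL_mono; [exact HN|]. intros z Hz. apply (proj2 (dom_mono m)). simpl; auto. }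
  split; [exact HTS|].
  assert (Main : forall q s0, Eqm s0 s -> domL L s0 -> cnt (fun z => In z (sQ s0)) L <= q ->
            forall x E K, PreL bx f x E K s0 -> TL L x s0).
  { intros q. induction q as [q IHq] using (well_founded_induction lt_wf).
    intros s0 Heq HdL Hq x E K Hpre.
    destruct (minQ (skey s0) (sQ s0)) as [y|] eqn:Hm.
    2: { left. exists 1, s0. intros m Hm'. destruct m; [lia|]. rewrite loop_S, Hm. reflexivity. }
    destruct (Z.leb (skey s0 y) (skey s0 x)) eqn:Hle'.
    2: { left. exists 1, s0. intros m Hm'. destruct m; [lia|]. rewrite loop_S, Hm, Hle'. reflexivity. }
    assert (Hle := Hle'). apply Z.leb_le in Hle.
    assert (Hpre' := PreS_pop Hpre Hm Hle).
    assert (Heqp : Eqm (popst y s0) s0) by (split; [split|]; simpl; auto; tauto).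
    destruct (HTS (popst y s0) (Eqm_trans Heqp Heq) (Eqm_domL Heqp HdL) y E K Hpre') as [[N1 [s'' HN1]]|[N1 HN1]].
    - assert (Hpost := proj1 (part1_main bx f rho0 N1) _ _ _ _ _ Hpre' (HN1 N1 (le_n _))).
      assert (HpreL'' := PreL_after_pop Hpre Hle Hpost).
      assert (HTL'' : TL L x s'' \/ ~ domL L s'').
      { destruct (dec (domL L s'')) as [Hd''|Hd'']; [left|right; auto].
        destruct Hpost as [_ [_ [_ [_ [[HB HQ]|HAC]]]]].
        - assert (Heq'' : Eqm s'' s) by (eapply Eqm_trans; [apply HistB_Eqm; exact HB|eapply Eqm_trans; eauto]).
          assert (Hlt : cnt (fun z => In z (sQ s'')) L < cnt (fun z => In z (sQ s0)) L).
          { destruct (minQ_some2 _ _ Hm) as [HyQ _].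
            apply cnt_strict with (y := y).
            - intros z _ Hz. destruct (HQ z Hz) as [Hz' _]. simpl in Hz'. apply In_removeQ2 in Hz'. tauto.
            - apply HdL. destruct Hpre as [[_ [g2 _]] _]. auto.
            - exact HyQ.
            - intros Hy. destruct (HQ y Hy) as [_ C]. congruence. }
          apply (IHq (cnt (fun z => In z (sQ s'')) L)) with (s0 := s'') (E := E) (K := K); auto; lia.
        - assert (Hord : Ord s'' s) by (eapply Ord_Eqm; [eapply Ord_Eqm; [apply HistAC_Ord; exact HAC|exact Heqp]|exact Heq]).
          apply (proj2 (IHo s'' Hord Hd'' (G_injD (proj1 HpreL''))) x E K HpreL''). }
      destruct HTL'' as [[[N2 [s3 HN2]]|[N2 HN2]]|Hd''].
      + left. exists (S (max N1 N2)), s3. intros m Hm'. destruct m as [|m]; [lia|].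
        rewrite loop_S, Hm, Hle'. rewrite HN1 by lia. apply HN2; lia.
      + right. exists (S (max N1 N2)). intros m Hm'. destruct m as [|m]; [lia|].
        rewrite loop_S, Hm, Hle'. rewrite HN1 by lia. apply HN2; lia.
      + right. exists (S N1). intros m Hm'. destruct m as [|m]; [lia|].
        rewrite loop_S, Hm, Hle'. rewrite HN1 by lia.
        eapply notdomL_mono; [exact Hd''|]. intros z Hz. apply (proj2 (dom_mono m)); auto.
    - right. exists (S N1). intros m Hm'. destruct m as [|m]; [lia|].
      rewrite loop_S, Hm, Hle'. specialize (HN1 m ltac:(lia)).
      destruct (solve bx f rho0 m y (popst y s0)) as [s'' []|s''] eqn:Es; simpl in *; auto.
      eapply notdomL_mono; [exact HN1|]. intros z Hz. apply (proj2 (dom_mono m)); auto. }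
  intros s0 Heq HdL x E K Hpre. eapply Main; eauto.
Qed.

Lemma part2 x0 : (exists L : list X, forall (n : nat) (y : X),
          sdom (res_state (run bx f rho0 x0 n)) y -> In y L) ->
       exists (n : nat) (s : state),
         run bx f rho0 x0 n = Done s tt /\
         partial_post_solution le f (sdom s) (srho s) /\ sdom s x0.
Proof.
  intros [L HL].
  set (si := init rho0 x0 (empty_state rho0)).
  assert (Hpre := PreS_top bx f rho0 x0). fold si in Hpre.
  assert (HdL : domL L si).
  { intros z [->|[]]. apply (HL 0). simpl. auto. }
  assert (HA := Acc_OrdL HdL (G_injD (proj1 Hpre))).
  destruct (proj1 (term_main HA) si (Eqm_refl si) HdL x0 [] 0%Z Hpre) as [[N [s' HN]]|[N HN]].
  - exists N, s'. assert (Hr : run bx f rho0 x0 N = Done s' tt) by (apply HN; lia).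
    split; [exact Hr|]. destruct (part1 bx f rho0 x0 N Hr) as [Hsol Hx0]. split; auto.
    intros z Hz. destruct (Hsol z Hz) as [A B]. split; auto.
    unfold boxdot in B. destruct (dec (le (evalT (srho s') (f z)) (srho s' z))) as [Hl|Hl]; auto.
    rewrite B. destruct Hwid as [_ [Hw _]]. apply Hw.
  - exfalso. apply (HN N (le_n _)). intros z Hz. apply (HL N). exact Hz.
Qed.
End P2.

Theorem mainTheorem6 :
  (forall (X D : Type) (box : D -> D -> D) (f : X -> tree X D) (rho0 : X -> D)
          (x0 : X) (n : nat) (s : state X D),
     run box f rho0 x0 n = Done s tt ->
     partial_box_solution box f (sdom s) (srho s) /\ sdom s x0)
  /\
  (forall (X D : Type) (le : D -> D -> Prop) (wid nar : D -> D -> D)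
          (f : X -> tree X D),
     directed le -> is_widening le wid -> is_narrowing le nar -> monotonic le f ->
     forall (rho0 : X -> D) (x0 : X),
       (exists L : list X, forall (n : nat) (y : X),
          sdom (res_state (run (boxdot le wid nar) f rho0 x0 n)) y -> In y L) ->
       exists (n : nat) (s : state X D),
         run (boxdot le wid nar) f rho0 x0 n = Done s tt /\
         partial_post_solution le f (sdom s) (srho s) /\ sdom s x0).
Proof.
  split.
  - intros X D box f rho0 x0 n s H. exact (part1 box f rho0 x0 n H).
  - intros X D le wid nar f [Hrefl [Htrans _]] Hwid Hnar Hmono rho0 x0 HL.
    exact (part2 rho0 Hrefl Htrans Hwid Hnar Hmono x0 HL).
Qed.
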